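(* Fix $\beta\in(1,2)$, let $Y$ be the stationary random walk described in the context, and let $\mathcal C=\{2,4,6,\dots\}$ be the set of even positive integers. Then $\mathbf P[Y_0\in\mathcal C]=1/4$ and, as $t\to\infty$, $$\mathbf P[Y_t\in\mathcal C\mid Y_0\in\mathcal C]=\tfrac14+t^{\frac{1-\beta}{2}+o(1)},$$ while $\mathbf P[Y_s\in\mathcal C\ \forall s\in\{0,\dots,t\}]$ decays exponentially in $t$.
   Context: The graph has vertex set $\mathbb Z^*=\mathbb Z\setminus\{0\}$ and edges: nearest-neighbour edges $\{n,n+1\}$ and $\{-(n+1),-n\}$ for $n\ge1$, the edge $\{-1,1\}$, and a self-loop at every vertex. Conductances: $c_{n,n+1}=c_{-(n+1),-n}=n^{-\beta}$ for $n\ge1$; $c_{-1,1}=c_{1,1}=c_{-1,-1}=1/2$; and for $|n|\ge2$ the self-loop conductance is $c_{n,n}=c_{n,n-1}+c_{n,n+1}$. The discrete-time walk moves from $x$ to $y$ with probability $c_{x,y}/\pi(x)$, where $\pi(x)=\sum_y c_{x,y}$ (self-loop counted once); it is run in stationarity (started from normalized $\pi$), with law $\mathbf P$. (With these conductances, $\mathbf P[Y_{t+1}\in 2\mathbb Z\mid Y_t]=1/2$ regardless of $Y_t$.) *)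

(* Defs.v *)
From Stdlib Require Import Reals ZArith.
Open Scope R_scope.

(* The vertex set is Z* = Z \ {0}, represented by integers x <> 0.
   Neighbours along the "line" Z*: up x is the successor (skipping 0),
   down x the predecessor. *)
Definition up (x : Z) : Z := if Z.eqb x (-1) then 1%Z else (x + 1)%Z.
Definition down (x : Z) : Z := if Z.eqb x 1 then (-1)%Z else (x - 1)%Z.

(* conductance of the edge {x, up x}:
   x >= 1      : edge {n,n+1}, n = x,        c = n^{-beta}
   x = -1      : edge {-1,1},                c = 1/2
   x <= -2     : edge {-(n+1),-n}, n = -x-1, c = n^{-beta} *)
Definition cedge (beta : R) (x : Z) : R :=
  if Z.leb 1 x then Rpower (IZR x) (- beta)
  else if Z.eqb x (-1) then / 2
  else if Z.leb x (-2) then Rpower (IZR (- x - 1)) (- beta)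
  else 0.

Definition cself (beta : R) (x : Z) : R :=
  if orb (Z.eqb x 1) (Z.eqb x (-1)) then / 2
  else if Z.eqb x 0 then 0
  else cedge beta (down x) + cedge beta x.

(* pi(x) = sum_y c_{x,y} (self-loop counted once); pi 0 = 0 (0 is not a vertex) *)
Definition pi (beta : R) (x : Z) : R :=
  if Z.eqb x 0 then 0
  else cedge beta (down x) + cedge beta x + cself beta x.

Definition pdown (beta : R) (x : Z) : R := cedge beta (down x) / pi beta x.
Definition pstay (beta : R) (x : Z) : R := cself beta x / pi beta x.
Definition pup (beta : R) (x : Z) : R := cedge beta x / pi beta x.

Definition indC (x : Z) : R := if andb (Z.ltb 0 x) (Z.even x) then 1 else 0.

Fixpoint hitC (beta : R) (t : nat) (x : Z) : R :=
  match t with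
  | O => indC x
  | S t' => pdown beta x * hitC beta t' (down x)
            + pstay beta x * hitC beta t' x
            + pup beta x * hitC beta t' (up x)
  end.

Fixpoint stayC (beta : R) (t : nat) (x : Z) : R :=
  match t with
  | O => indC x
  | S t' => indC x * (pdown beta x * stayC beta t' (down x)
                      + pstay beta x * stayC beta t' x
                      + pup beta x * stayC beta t' (up x))
  end.

Definition sumZstar (f : Z -> R) (l : R) : Prop :=
  infinite_sum (fun n => f (Z.of_nat (S n)) + f (- Z.of_nat (S n))%Z) l.

Definition sumC (f : Z -> R) (l : R) : Prop :=
  infinite_sum (fun n => f (2 * Z.of_nat (S n))%Z) l.

(* Main.v *)
From Pilot Require Import Defs.
From Stdlib Require Import Reals ZArith.
Open Scope R_scope.

From Stdlib Require Import Lra Lia Psatz.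
From Coquelicot Require Import Coquelicot.
Import Pilot.Defs.
Open Scope R_scope.

Lemma Rpow_pos a e : 0 < Rpower a e.
Proof. unfold Rpower; apply exp_pos. Qed.

Lemma exp_mono x y : x <= y -> exp x <= exp y.
Proof. intros [H|H]; [left; apply exp_increasing; auto | subst; right; auto]. Qed.

Lemma ln_le' a b : 0 < a -> a <= b -> ln a <= ln b.
Proof. intros Ha [H|H]; [left; apply ln_increasing; auto | subst; right; auto]. Qed.

Lemma Rpow_mono_neg a b e : 0 < a -> a <= b -> e <= 0 -> Rpower b e <= Rpower a e.
Proof. intros Ha Hab He; unfold Rpower; apply exp_mono.
  assert (ln a <= ln b) by (apply ln_le'; lra). nra. Qed.

Lemma Rpow_mono_pos a b e : 0 < a -> a <= b -> 0 <= e -> Rpower a e <= Rpower b e.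
Proof. intros Ha Hab He; unfold Rpower; apply exp_mono.
  assert (ln a <= ln b) by (apply ln_le'; lra). nra. Qed.

Lemma Rpower_1_base e : Rpower 1 e = 1.
Proof. unfold Rpower; rewrite ln_1, Rmult_0_r, exp_0; auto. Qed.

Lemma down_ge2 x : (2 <= x)%Z -> down x = (x-1)%Z.
Proof. intro H; unfold down; rewrite (proj2 (Z.eqb_neq x 1%Z)) by lia; auto. Qed.
Lemma up_ge1 x : (1 <= x)%Z -> up x = (x+1)%Z.
Proof. intro H; unfold up; rewrite (proj2 (Z.eqb_neq x (-1)%Z)) by lia; auto. Qed.
Lemma down_neg x : (x <= -1)%Z -> down x = (x-1)%Z.
Proof. intro H; unfold down; rewrite (proj2 (Z.eqb_neq x 1%Z)) by lia; auto. Qed.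
Lemma up_le2 x : (x <= -2)%Z -> up x = (x+1)%Z.
Proof. intro H; unfold up; rewrite (proj2 (Z.eqb_neq x (-1)%Z)) by lia; auto. Qed.

Lemma cedge_pos beta x : (1 <= x)%Z -> cedge beta x = Rpower (IZR x) (-beta).
Proof. intro H; unfold cedge; rewrite (proj2 (Z.leb_le 1%Z x) H); auto. Qed.
Lemma cedge_neg beta x : (x <= -2)%Z -> cedge beta x = Rpower (IZR (-x-1)) (-beta).
Proof. intro H; unfold cedge.
  rewrite (proj2 (Z.leb_gt 1%Z x)) by lia.
  rewrite (proj2 (Z.eqb_neq x (-1)%Z)) by lia.
  rewrite (proj2 (Z.leb_le x (-2)%Z)) by lia; auto. Qed.

Definition AA beta (y : Z) := Rpower (IZR (y-1)) (-beta).
Definition BB beta (y : Z) := Rpower (IZR y) (-beta).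

Lemma pi_ge2 beta y : (2 <= y)%Z -> pi beta y = 2 * (AA beta y + BB beta y).
Proof. intro H. unfold pi, cself, AA, BB.
  rewrite (proj2 (Z.eqb_neq y 0%Z)) by lia.
  rewrite (proj2 (Z.eqb_neq y 1%Z)) by lia.
  rewrite (proj2 (Z.eqb_neq y (-1)%Z)) by lia. simpl.
  rewrite down_ge2 by lia. rewrite !cedge_pos by lia. ring. Qed.

Lemma pi_negge2 beta y : (2 <= y)%Z -> pi beta (-y) = 2 * (AA beta y + BB beta y).
Proof. intro H. unfold pi, cself, AA, BB.
  rewrite (proj2 (Z.eqb_neq (-y) 0%Z)) by lia.
  rewrite (proj2 (Z.eqb_neq (-y) 1%Z)) by lia.
  rewrite (proj2 (Z.eqb_neq (-y) (-1)%Z)) by lia. simpl.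
  rewrite down_neg by lia. rewrite !cedge_neg by lia.
  replace (- (- y - 1) - 1)%Z with y by lia.
  replace (- - y - 1)%Z with (y-1)%Z by lia. ring. Qed.

Lemma AB_pos beta y : 0 < AA beta y /\ 0 < BB beta y.
Proof. split; apply Rpow_pos. Qed.

Lemma pdown_ge2 beta y : (2 <= y)%Z -> pdown beta y = AA beta y / (2 * (AA beta y + BB beta y)).
Proof. intro H; unfold pdown; rewrite pi_ge2 by auto; rewrite down_ge2, cedge_pos by lia; auto. Qed.
Lemma pup_ge2 beta y : (2 <= y)%Z -> pup beta y = BB beta y / (2 * (AA beta y + BB beta y)).
Proof. intro H; unfold pup; rewrite pi_ge2 by auto; rewrite cedge_pos by lia; auto. Qed.
Lemma pstay_ge2 beta y : (2 <= y)%Z -> pstay beta y = / 2.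
Proof. intro H; unfold pstay; rewrite pi_ge2 by auto.
  unfold cself. rewrite (proj2 (Z.eqb_neq y 0%Z)) by lia.
  rewrite (proj2 (Z.eqb_neq y 1%Z)) by lia.
  rewrite (proj2 (Z.eqb_neq y (-1)%Z)) by lia. simpl.
  rewrite down_ge2 by lia. rewrite !cedge_pos by lia. fold (AA beta y) (BB beta y).
  destruct (AB_pos beta y). field. lra. Qed.

Lemma pdown_neg beta y : (2 <= y)%Z -> pdown beta (-y) = BB beta y / (2 * (AA beta y + BB beta y)).
Proof. intro H; unfold pdown; rewrite pi_negge2 by auto; rewrite down_neg, cedge_neg by lia.
  unfold BB; f_equal; f_equal; f_equal; lia. Qed.
Lemma pup_neg beta y : (2 <= y)%Z -> pup beta (-y) = AA beta y / (2 * (AA beta y + BB beta y)).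
Proof. intro H; unfold pup; rewrite pi_negge2 by auto; rewrite cedge_neg by lia.
  unfold AA; f_equal; f_equal; f_equal; lia. Qed.
Lemma pstay_neg beta y : (2 <= y)%Z -> pstay beta (-y) = / 2.
Proof. intro H; unfold pstay; rewrite pi_negge2 by auto.
  unfold cself. rewrite (proj2 (Z.eqb_neq (-y) 0%Z)) by lia.
  rewrite (proj2 (Z.eqb_neq (-y) 1%Z)) by lia.
  rewrite (proj2 (Z.eqb_neq (-y) (-1)%Z)) by lia. simpl.
  rewrite down_neg by lia. rewrite !cedge_neg by lia.
  replace (- (- y - 1) - 1)%Z with y by lia.
  replace (- - y - 1)%Z with (y-1)%Z by lia. fold (AA beta y) (BB beta y).
  destruct (AB_pos beta y). field. lra. Qed.

Lemma cedge_m1 beta : cedge beta (-1) = /2.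
Proof. reflexivity. Qed.
Lemma cedge_1 beta : cedge beta 1 = 1.
Proof. unfold cedge; simpl. apply Rpower_1_base. Qed.
Lemma cedge_m2 beta : cedge beta (-2) = 1.
Proof. unfold cedge; simpl. apply Rpower_1_base. Qed.
Lemma pi_1 beta : pi beta 1 = 2.
Proof. unfold pi, cself; simpl. unfold down; simpl. rewrite cedge_m1, cedge_1. lra. Qed.
Lemma pi_m1 beta : pi beta (-1) = 2.
Proof. unfold pi, cself; simpl. unfold down; simpl. rewrite cedge_m1, cedge_m2. lra. Qed.
Lemma pdown_1 beta : pdown beta 1 = /4.
Proof. unfold pdown; rewrite pi_1; unfold down; simpl; rewrite cedge_m1; lra. Qed.
Lemma pstay_1 beta : pstay beta 1 = /4.
Proof. unfold pstay; rewrite pi_1; unfold cself; simpl; lra. Qed.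
Lemma pup_1 beta : pup beta 1 = /2.
Proof. unfold pup; rewrite pi_1, cedge_1; lra. Qed.
Lemma pdown_m1 beta : pdown beta (-1) = /2.
Proof. unfold pdown; rewrite pi_m1; unfold down; simpl; rewrite cedge_m2; lra. Qed.
Lemma pstay_m1 beta : pstay beta (-1) = /4.
Proof. unfold pstay; rewrite pi_m1; unfold cself; simpl; lra. Qed.
Lemma pup_m1 beta : pup beta (-1) = /4.
Proof. unfold pup; rewrite pi_m1, cedge_m1; lra. Qed.

Lemma AB_ratio1 beta y : 1 < beta < 2 -> (2 <= y)%Z ->
  AA beta y * (IZR y - 1) >= BB beta y * IZR y.
Proof. intros Hb Hy. unfold AA, BB.
  assert (HY: 2 <= IZR y) by (apply IZR_le; lia).
  rewrite minus_IZR.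
  assert (E1: Rpower (IZR y - 1) (-beta) * (IZR y - 1) = Rpower (IZR y - 1) (-beta + 1)).
  { rewrite Rpower_plus, Rpower_1 by lra; auto. }
  assert (E2: Rpower (IZR y) (-beta) * (IZR y) = Rpower (IZR y) (-beta + 1)).
  { rewrite Rpower_plus, Rpower_1 by lra; auto. }
  rewrite E1, E2. apply Rle_ge. apply Rpow_mono_neg; lra. Qed.

Lemma AB_ratio2 beta y : 1 < beta < 2 -> (2 <= y)%Z ->
  AA beta y * (IZR y - 1)^2 <= BB beta y * (IZR y)^2.
Proof. intros Hb Hy. unfold AA, BB.
  assert (HY: 2 <= IZR y) by (apply IZR_le; lia).
  rewrite minus_IZR.
  rewrite <- (Rpower_pow 2 (IZR y - 1)) by lra.
  rewrite <- (Rpower_pow 2 (IZR y)) by lra.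
  rewrite <- !Rpower_plus. apply Rpow_mono_pos; try lra. simpl INR. lra. Qed.

Lemma drift_facts beta y : 1 < beta < 2 -> (2 <= y)%Z ->
  0 <= pdown beta y /\ 0 <= pup beta y /\ pdown beta y + pup beta y = /2 /\
  pstay beta y = /2 /\
  / (2 * (2 * IZR y - 1)) <= pdown beta y - pup beta y /\
  pdown beta y - pup beta y <= 6 / IZR y.
Proof. intros Hb Hy.
  rewrite pdown_ge2, pup_ge2, pstay_ge2 by lia.
  pose proof (AB_ratio1 beta y Hb Hy) as R1. pose proof (AB_ratio2 beta y Hb Hy) as R2.
  destruct (AB_pos beta y) as [HA HB].
  set (A := AA beta y) in *. set (B := BB beta y) in *.
  assert (HY: 2 <= IZR y) by (apply IZR_le; lia). set (Y := IZR y) in *.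
  repeat split.
  - apply Rmult_le_pos; [lra| left; apply Rinv_0_lt_compat; lra].
  - apply Rmult_le_pos; [lra| left; apply Rinv_0_lt_compat; lra].
  - field; lra.
  - replace (A / (2 * (A + B)) - B / (2 * (A + B))) with ((A - B) / (2*(A+B))) by (field; lra).
    apply Rmult_le_reg_l with (2 * (2 * Y - 1) * (2*(A+B))). nra.
    field_simplify; try lra.
  - replace (A / (2 * (A + B)) - B / (2 * (A + B))) with ((A - B) / (2*(A+B))) by (field; lra).
    apply Rmult_le_reg_l with (Y * (2*(A+B))). nra.
    field_simplify; try lra.
    assert (HY1: 0 < Y - 1) by lra.
    assert (A * (Y-1)^2 <= B * Y^2) by exact R2.
    assert ((A - B) * (Y - 1)^2 <= B * (2*Y - 1)).
    { assert (E: (A-B)*(Y-1)^2 - B*(2*Y-1) = A*(Y-1)^2 - B*Y^2) by ring. lra. }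
    assert (Q: (2*Y-1)*Y <= 12*(Y-1)^2) by nra.
    assert (Q1: 0 <= B*(12*(Y-1)^2 - (2*Y-1)*Y)) by (apply Rmult_le_pos; lra).
    assert (Q2: 0 <= Y*(B * (2*Y - 1) - (A - B) * (Y - 1)^2)) by (apply Rmult_le_pos; lra).
    assert (Q3: 0 <= A * (Y-1)^2) by (apply Rmult_le_pos; nra).
    assert ((A - B) * Y * (Y-1)^2 <= 12 * (A + B) * (Y-1)^2) by nra.
    assert ((A - B) * Y <= 12 * (A + B)).
    { apply Rmult_le_reg_r with ((Y-1)^2). nra. nra. }
    nra.
Qed.

Fixpoint uu beta (t : nat) (x : Z) : R :=
  match t with
  | O => 1
  | S t' => if Z.eqb x 1 then / 2 * uu beta t' 2
            else pdown beta x * uu beta t' (x-1) + pstay beta x * uu beta t' x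
                 + pup beta x * uu beta t' (x+1)
  end.

Lemma indC_neg x : (x <= 0)%Z -> indC x = 0.
Proof. intro H; unfold indC. rewrite (proj2 (Z.ltb_ge 0 x)) by lia. reflexivity. Qed.

Lemma indC_par x : (2 <= x)%Z ->
  (Z.even x = true /\ indC x = 1 /\ indC (x-1) = 0 /\ indC (x+1) = 0) \/
  (Z.even x = false /\ indC x = 0 /\ indC (x-1) = 1 /\ indC (x+1) = 1).
Proof. intro H. unfold indC.
  rewrite (proj2 (Z.ltb_lt 0 x)) by lia.
  rewrite (proj2 (Z.ltb_lt 0 (x-1))) by lia.
  rewrite (proj2 (Z.ltb_lt 0 (x+1))) by lia.
  rewrite Z.even_sub, Z.even_add. simpl.
  destruct (Z.even x); simpl; [left|right]; repeat split; reflexivity. Qed.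

Lemma neg_sym beta y : (2 <= y)%Z ->
  pdown beta (-y) = pup beta y /\ pup beta (-y) = pdown beta y /\ pstay beta (-y) = pstay beta y.
Proof. intro H. rewrite pdown_neg, pup_neg, pstay_neg, pdown_ge2, pup_ge2, pstay_ge2 by lia. auto. Qed.

Lemma hit_formula beta t : 1 < beta < 2 -> forall x,
  ((1 <= x)%Z -> hitC beta (S t) x = /4 + uu beta t x / 4) /\
  ((x <= -1)%Z -> hitC beta (S t) x = /4 - uu beta t (-x) / 4).
Proof. intro Hb. induction t as [|t IH]; intro x.
  - split; intro Hx.
    + simpl hitC. simpl uu.
      destruct (Z.eq_dec x 1) as [->|Hx1].
      * unfold down, up; simpl. rewrite pdown_1, pstay_1, pup_1.
        unfold indC; simpl. lra.
      * assert (H2: (2 <= x)%Z) by lia.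
        rewrite down_ge2, up_ge1 by lia.
        destruct (drift_facts beta x Hb H2) as (h1&h2&h3&h4&_).
        destruct (indC_par x H2) as [(_&e1&e2&e3)|(_&e1&e2&e3)]; rewrite e1, e2, e3; lra.
    + simpl hitC.
      destruct (Z.eq_dec x (-1)) as [->|Hx1].
      * unfold down, up; simpl. rewrite pdown_m1, pstay_m1, pup_m1.
        unfold indC; simpl. lra.
      * rewrite down_neg, up_le2 by lia. rewrite !indC_neg by lia. simpl. lra.
  - split; intro Hx.
    + change (hitC beta (S (S t)) x) with
        (pdown beta x * hitC beta (S t) (down x) + pstay beta x * hitC beta (S t) x
         + pup beta x * hitC beta (S t) (up x)).
      destruct (Z.eq_dec x 1) as [->|Hx1].
      * replace (down 1%Z) with (-1)%Z by reflexivity. replace (up 1%Z) with 2%Z by reflexivity.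
        rewrite (proj2 (IH (-1)%Z)) by lia. rewrite (proj1 (IH 1%Z)) by lia.
        rewrite (proj1 (IH 2%Z)) by lia.
        rewrite pdown_1, pstay_1, pup_1. simpl uu. replace (- -1)%Z with 1%Z by lia. lra.
      * assert (H2: (2 <= x)%Z) by lia.
        rewrite down_ge2, up_ge1 by lia.
        rewrite (proj1 (IH (x-1)%Z)) by lia. rewrite (proj1 (IH x)) by lia.
        rewrite (proj1 (IH (x+1)%Z)) by lia.
        simpl uu. rewrite (proj2 (Z.eqb_neq x 1%Z)) by lia.
        destruct (drift_facts beta x Hb H2) as (h1&h2&h3&h4&_). lra.
    + change (hitC beta (S (S t)) x) with
        (pdown beta x * hitC beta (S t) (down x) + pstay beta x * hitC beta (S t) x
         + pup beta x * hitC beta (S t) (up x)).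
      destruct (Z.eq_dec x (-1)) as [->|Hx1].
      * replace (down (-1)%Z) with (-2)%Z by reflexivity. replace (up (-1)%Z) with 1%Z by reflexivity.
        rewrite (proj2 (IH (-1)%Z)) by lia. rewrite (proj1 (IH 1%Z)) by lia.
        rewrite (proj2 (IH (-2)%Z)) by lia.
        rewrite pdown_m1, pstay_m1, pup_m1. simpl uu. replace (- -1)%Z with 1%Z by lia.
        replace (- -2)%Z with 2%Z by lia. lra.
      * assert (H2: (x <= -2)%Z) by lia.
        rewrite down_neg, up_le2 by lia.
        rewrite (proj2 (IH (x-1)%Z)) by lia. rewrite (proj2 (IH x)) by lia.
        rewrite (proj2 (IH (x+1)%Z)) by lia.
        set (y := (-x)%Z). assert (Ex: x = (-y)%Z) by (unfold y; lia).
        assert (Hy: (2 <= y)%Z) by lia.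
        replace (- (x-1))%Z with (y+1)%Z by lia.
        replace (- (x+1))%Z with (y-1)%Z by lia.
        simpl uu. rewrite (proj2 (Z.eqb_neq y 1%Z)) by lia.
        rewrite Ex. destruct (neg_sym beta y Hy) as (s1&s2&s3). rewrite s1, s2, s3.
        destruct (drift_facts beta y Hb Hy) as (h1&h2&h3&h4&_). lra.
Qed.

Lemma uu_bounds beta t : 1 < beta < 2 -> forall x, (1 <= x)%Z -> 0 <= uu beta t x <= 1.
Proof. intro Hb. induction t as [|t IH]; intros x Hx; simpl; [lra|].
  destruct (Z.eqb_spec x 1) as [->|Hx1].
  - specialize (IH 2%Z ltac:(lia)). lra.
  - destruct (drift_facts beta x Hb ltac:(lia)) as (h1&h2&h3&h4&_).
    pose proof (IH (x-1)%Z ltac:(lia)). pose proof (IH x Hx). pose proof (IH (x+1)%Z ltac:(lia)).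
    split; nra. Qed.

Lemma uu_S beta t x : uu beta (S t) x =
  if Z.eqb x 1 then / 2 * uu beta t 2
  else pdown beta x * uu beta t (x-1) + pstay beta x * uu beta t x + pup beta x * uu beta t (x+1).
Proof. reflexivity. Qed.

Lemma uu_step_mono beta t : 1 < beta < 2 -> forall x, (1 <= x)%Z -> uu beta (S t) x <= uu beta t x.
Proof. intro Hb. induction t as [|t IH]; intros x Hx.
  - pose proof (uu_bounds beta 1 Hb x Hx). simpl uu at 2. lra.
  - rewrite (uu_S beta (S t) x).
    destruct (Z.eqb_spec x 1) as [->|Hx1].
    + rewrite (uu_S beta t 1%Z). simpl Z.eqb. cbv iota. specialize (IH 2%Z ltac:(lia)). lra.
    + pose proof (uu_S beta t x) as E. rewrite (proj2 (Z.eqb_neq x 1%Z) Hx1) in E.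
      destruct (drift_facts beta x Hb ltac:(lia)) as (h1&h2&h3&h4&_).
      pose proof (IH (x-1)%Z ltac:(lia)). pose proof (IH x Hx). pose proof (IH (x+1)%Z ltac:(lia)).
      rewrite h4 in *.
      assert (pdown beta x * uu beta (S t) (x - 1) <= pdown beta x * uu beta t (x - 1))
        by (apply Rmult_le_compat_l; lra).
      assert (pup beta x * uu beta (S t) (x + 1) <= pup beta x * uu beta t (x + 1))
        by (apply Rmult_le_compat_l; lra).
      lra. Qed.

Lemma uu_mono beta k m : 1 < beta < 2 -> (m <= k)%nat -> forall x, (1 <= x)%Z ->
  uu beta k x <= uu beta m x.
Proof. intros Hb Hk. induction Hk; intros x Hx; [lra|].
  pose proof (uu_step_mono beta m0 Hb x Hx). specialize (IHHk x Hx). lra. Qed.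

Lemma LB_main beta x0 : 1 < beta < 2 -> 4 <= x0 -> forall t y, (1 <= y)%Z ->
  1 - uu beta t y <= 4 * ((x0 - IZR y)^2 + 25 * INR t) / x0^2.
Proof. intros Hb Hx0. induction t as [|t IH]; intros y Hy.
  - change (uu beta 0 y) with 1. replace (INR 0) with 0 by reflexivity.
    assert (0 <= 4 * ((x0 - IZR y) ^ 2 + 25 * 0) / x0 ^ 2).
    { apply Rmult_le_pos; [| left; apply Rinv_0_lt_compat; nra].
      pose proof (pow2_ge_0 (x0 - IZR y)). lra. } lra.
  - assert (HY: 1 <= IZR y) by (apply IZR_le; lia).
    pose proof (uu_bounds beta (S t) Hb y Hy) as Hu.
    rewrite S_INR.
    assert (Hpos: 0 < x0^2) by nra.
    destruct (Rle_lt_dec (IZR y) (x0/2)) as [Hl|Hl].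
    + apply Rle_trans with 1; [lra|].
      apply Rmult_le_reg_r with (x0^2); auto.
      unfold Rdiv; rewrite Rmult_assoc, Rinv_l by lra.
      pose proof (pos_INR t). nra.
    + assert (Hy2: (2 <= y)%Z).
      { assert (2 < IZR y) by lra. apply lt_IZR in H. lia. }
      simpl uu. rewrite (proj2 (Z.eqb_neq y 1%Z)) by lia.
      destruct (drift_facts beta y Hb Hy2) as (h1&h2&h3&h4&h5&h6).
      pose proof (IH (y-1)%Z ltac:(lia)) as I1. pose proof (IH y Hy) as I2.
      pose proof (IH (y+1)%Z ltac:(lia)) as I3.
      rewrite minus_IZR in I1. rewrite plus_IZR in I3.
      set (Y := IZR y) in *. set (pd := pdown beta y) in *. set (pu := pup beta y) in *.
      set (u1 := uu beta t (y-1)) in *. set (u2 := uu beta t y) in *. set (u3 := uu beta t (y+1)) in *.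
      set (T := INR t) in *.
      assert (Hkey: 2 * (x0 - Y) * (pd - pu) <= 24).
      { destruct (Rle_lt_dec x0 Y).
        - assert (0 <= pd - pu). { apply Rle_trans with (/ (2 * (2 * Y - 1))); auto.
            left; apply Rinv_0_lt_compat; lra. }
          nra.
        - assert ((pd - pu) * Y <= 6).
          { apply Rle_trans with (6 / Y * Y). apply Rmult_le_compat_r; lra.
            right; field; lra. }
          assert (0 <= pd - pu). { apply Rle_trans with (/ (2 * (2 * Y - 1))); auto.
            left; apply Rinv_0_lt_compat; lra. }
          nra. }
      assert (E: forall a, 4 * a / x0^2 = a * (4 / x0^2)) by (intro; unfold Rdiv; ring).
      rewrite E in I1, I2, I3 |- *.
      set (k := 4 / x0^2) in *.
      assert (Hk: 0 < k) by (unfold k; apply Rmult_lt_0_compat; [lra| apply Rinv_0_lt_compat; lra]).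
      assert (HG: 1 - (pd * u1 + / 2 * u2 + pu * u3) =
        pd * (1 - u1) + /2 * (1 - u2) + pu * (1 - u3)) by lra.
      rewrite h4. rewrite HG.
      apply Rle_trans with (pd * (((x0 - (Y - 1)) ^ 2 + 25 * T) * k) + /2 * (((x0 - Y) ^ 2 + 25 * T) * k)
                            + pu * (((x0 - (Y + 1)) ^ 2 + 25 * T) * k)).
      { apply Rplus_le_compat. apply Rplus_le_compat.
        apply Rmult_le_compat_l; auto. apply Rmult_le_compat_l; lra. apply Rmult_le_compat_l; auto. }
      assert (Hs: pd * ((x0 - (Y - 1)) ^ 2 + 25 * T) + /2 * ((x0 - Y) ^ 2 + 25 * T)
                + pu * ((x0 - (Y + 1)) ^ 2 + 25 * T) <= (x0 - Y) ^ 2 + 25 * (T + 1)).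
      { assert (pd + /2 + pu = 1) by lra.
        assert (EE: pd * ((x0 - (Y - 1)) ^ 2 + 25 * T) + /2 * ((x0 - Y) ^ 2 + 25 * T)
                + pu * ((x0 - (Y + 1)) ^ 2 + 25 * T) = (pd + /2 + pu) * ((x0 - Y) ^ 2 + 25 * T)
                + 2 * (x0 - Y) * (pd - pu) + (pd + pu)) by ring.
        rewrite EE, H. lra. }
      nra.
Qed.

Lemma LB_half beta x0 t y : 1 < beta < 2 -> 4 <= x0 -> 400 * INR t <= x0^2 ->
  (1 <= y)%Z -> x0 <= IZR y <= 5/4 * x0 -> / 2 <= uu beta t y.
Proof. intros Hb Hx0 Ht Hy HY.
  pose proof (LB_main beta x0 Hb Hx0 t y Hy) as H.
  assert (4 * ((x0 - IZR y) ^ 2 + 25 * INR t) / x0 ^ 2 <= /2).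
  { apply Rmult_le_reg_r with (x0^2). nra.
    unfold Rdiv; rewrite Rmult_assoc, Rinv_l by nra. nra. }
  lra. Qed.

Fixpoint hh beta (t : nat) (x : Z) : R :=
  match t with
  | O => if Z.eqb x 1 then 0 else 1
  | S t' => if Z.eqb x 1 then 0
            else pdown beta x * hh beta t' (x-1) + pstay beta x * hh beta t' x
                 + pup beta x * hh beta t' (x+1)
  end.

Definition inte (L x : Z) : bool := andb (Z.ltb 1 x) (Z.ltb x L).

Fixpoint gg beta (L : Z) (t : nat) (x : Z) : R :=
  match t with
  | O => if inte L x then 1 else 0
  | S t' => if inte L x then pdown beta x * gg beta L t' (x-1) + pstay beta x * gg beta L t' x
                 + pup beta x * gg beta L t' (x+1) else 0
  end.

Fixpoint GS beta L (n : nat) (x : Z) : R :=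
  match n with O => 0 | S n' => GS beta L n' x + gg beta L n' x end.

Lemma inte_true L x : inte L x = true -> (1 < x)%Z /\ (x < L)%Z.
Proof. unfold inte; intro H; apply andb_prop in H; destruct H as [H1 H2];
  apply Z.ltb_lt in H1; apply Z.ltb_lt in H2; auto. Qed.

Lemma hh_bounds beta t : 1 < beta < 2 -> forall x, (1 <= x)%Z -> 0 <= hh beta t x <= 1.
Proof. intro Hb. induction t as [|t IH]; intros x Hx; simpl.
  - destruct (Z.eqb x 1); lra.
  - destruct (Z.eqb_spec x 1) as [->|Hx1]; [lra|].
    destruct (drift_facts beta x Hb ltac:(lia)) as (h1&h2&h3&h4&_).
    pose proof (IH (x-1)%Z ltac:(lia)). pose proof (IH x Hx). pose proof (IH (x+1)%Z ltac:(lia)).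
    rewrite h4. split; nra. Qed.

Lemma gg_bounds beta L t : 1 < beta < 2 -> forall x, (1 <= x)%Z -> 0 <= gg beta L t x <= 1.
Proof. intro Hb. induction t as [|t IH]; intros x Hx; simpl.
  - destruct (inte L x); lra.
  - destruct (inte L x) eqn:E; [|lra].
    apply inte_true in E.
    destruct (drift_facts beta x Hb ltac:(lia)) as (h1&h2&h3&h4&_).
    pose proof (IH (x-1)%Z ltac:(lia)). pose proof (IH x Hx). pose proof (IH (x+1)%Z ltac:(lia)).
    rewrite h4. split; nra. Qed.

Lemma gg_out beta L t x : inte L x = false -> gg beta L t x = 0.
Proof. intro H; destruct t; simpl; rewrite H; auto. Qed.

Lemma U1 beta n m : 1 < beta < 2 -> forall x, (1 <= x)%Z ->
  uu beta (n + m) x <= hh beta n x + uu beta m 1.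
Proof. intro Hb. induction n as [|n IH]; intros x Hx.
  - simpl. destruct (Z.eqb_spec x 1) as [->|Hx1]; [lra|].
    pose proof (uu_bounds beta m Hb x Hx). pose proof (uu_bounds beta m Hb 1 ltac:(lia)). lra.
  - destruct (Z.eqb_spec x 1) as [->|Hx1].
    + simpl hh. pose proof (uu_mono beta (S n + m) m Hb ltac:(lia) 1%Z ltac:(lia)). lra.
    + replace (S n + m)%nat with (S (n + m)) by lia. rewrite uu_S.
      rewrite (proj2 (Z.eqb_neq x 1%Z) Hx1).
      simpl hh. rewrite (proj2 (Z.eqb_neq x 1%Z) Hx1).
      destruct (drift_facts beta x Hb ltac:(lia)) as (h1&h2&h3&h4&_).
      pose proof (IH (x-1)%Z ltac:(lia)). pose proof (IH x Hx). pose proof (IH (x+1)%Z ltac:(lia)).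
      rewrite h4 in *.
      assert (pdown beta x * uu beta (n + m) (x - 1) <= pdown beta x * (hh beta n (x - 1) + uu beta m 1))
        by (apply Rmult_le_compat_l; lra).
      assert (pup beta x * uu beta (n + m) (x + 1) <= pup beta x * (hh beta n (x + 1) + uu beta m 1))
        by (apply Rmult_le_compat_l; lra).
      nra. Qed.

Lemma U2 beta L n : 1 < beta < 2 -> (2 <= L)%Z -> forall x, (1 <= x)%Z ->
  hh beta n x <= IZR x ^ 2 / IZR L ^ 2 + gg beta L n x.
Proof. intros Hb HL. assert (HL': 2 <= IZR L) by (apply IZR_le; lia).
  assert (phi_nonneg: forall x, 0 <= IZR x ^ 2 / IZR L ^ 2).
  { intro x. apply Rmult_le_pos. apply pow2_ge_0. left; apply Rinv_0_lt_compat; nra. }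
  assert (phi_big: forall x, (L <= x)%Z -> 1 <= IZR x ^ 2 / IZR L ^ 2).
  { intros x Hx. assert (IZR L <= IZR x) by (apply IZR_le; lia).
    apply Rmult_le_reg_r with (IZR L ^ 2). nra. unfold Rdiv; rewrite Rmult_assoc, Rinv_l by nra. nra. }
  induction n as [|n IH]; intros x Hx.
  - cbn [hh gg]. destruct (Z.eqb_spec x 1) as [->|Hx1].
    + pose proof (phi_nonneg 1%Z). destruct (inte L 1); lra.
    + destruct (Z_lt_le_dec x L).
      * unfold inte. rewrite (proj2 (Z.ltb_lt 1 x)) by lia. rewrite (proj2 (Z.ltb_lt x L)) by lia.
        cbn [andb]. pose proof (phi_nonneg x). lra.
      * pose proof (phi_big x l). destruct (inte L x); lra.
  - pose proof (gg_bounds beta L (S n) Hb x Hx) as G.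
    destruct (Z.eqb_spec x 1) as [->|Hx1].
    + simpl hh. pose proof (phi_nonneg 1%Z). lra.
    + destruct (Z_lt_le_dec x L) as [HxL|HxL].
      2:{ pose proof (phi_big x HxL). pose proof (hh_bounds beta (S n) Hb x Hx). lra. }
      simpl hh. rewrite (proj2 (Z.eqb_neq x 1%Z) Hx1).
      simpl gg. unfold inte. rewrite (proj2 (Z.ltb_lt 1 x)) by lia. rewrite (proj2 (Z.ltb_lt x L)) by lia.
      simpl andb. cbv iota.
      destruct (drift_facts beta x Hb ltac:(lia)) as (h1&h2&h3&h4&h5&_).
      pose proof (IH (x-1)%Z ltac:(lia)). pose proof (IH x Hx). pose proof (IH (x+1)%Z ltac:(lia)).
      rewrite minus_IZR, plus_IZR in *. rewrite h4 in *.
      set (X := IZR x) in *. assert (HX: 2 <= X) by (apply IZR_le; lia).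
      set (l2 := IZR L ^ 2) in *.
      assert (Hsup: pdown beta x * (X - 1)^2 + / 2 * X^2 + pup beta x * (X + 1)^2 <= X^2).
      { assert (2 * X * (pdown beta x - pup beta x) >= / 2).
        { assert (X / (2 * X - 1) >= /2).
          { apply Rle_ge. apply Rmult_le_reg_r with (2 * X - 1). lra.
            unfold Rdiv; rewrite Rmult_assoc, Rinv_l by lra. lra. }
          assert (2 * X * / (2 * (2 * X - 1)) = X / (2 * X - 1)) by (field; lra).
          assert (2 * X * / (2 * (2 * X - 1)) <= 2 * X * (pdown beta x - pup beta x))
            by (apply Rmult_le_compat_l; lra). lra. }
        assert (E: pdown beta x * (X - 1)^2 + / 2 * X^2 + pup beta x * (X + 1)^2 =
           (pdown beta x + /2 + pup beta x) * X^2 - 2 * X * (pdown beta x - pup beta x)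
            + (pdown beta x + pup beta x)) by ring.
        rewrite E. nra. }
      assert (Hl2: 0 < / l2) by (apply Rinv_0_lt_compat; unfold l2; nra).
      unfold Rdiv in *.
      assert (pdown beta x * hh beta n (x - 1) <= pdown beta x * ((X - 1) ^ 2 * / l2 + gg beta L n (x - 1)))
        by (apply Rmult_le_compat_l; lra).
      assert (pup beta x * hh beta n (x + 1) <= pup beta x * ((X + 1) ^ 2 * / l2 + gg beta L n (x + 1)))
        by (apply Rmult_le_compat_l; lra).
      assert (pdown beta x * (X - 1)^2 * / l2 + / 2 * X^2 * / l2 + pup beta x * (X + 1)^2 * / l2 <= X^2 * / l2).
      { assert (E: pdown beta x * (X - 1)^2 * / l2 + / 2 * X^2 * / l2 + pup beta x * (X + 1)^2 * / l2
           = (pdown beta x * (X - 1)^2 + / 2 * X^2 + pup beta x * (X + 1)^2) * / l2) by ring.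
        rewrite E. apply Rmult_le_compat_r; lra. }
      nra.
Qed.

Lemma gg_S beta L t x : gg beta L (S t) x = if inte L x then pdown beta x * gg beta L t (x-1)
   + pstay beta x * gg beta L t x + pup beta x * gg beta L t (x+1) else 0.
Proof. reflexivity. Qed.

Lemma gg_step_mono beta L t : 1 < beta < 2 -> forall x, (1 <= x)%Z -> gg beta L (S t) x <= gg beta L t x.
Proof. intro Hb. induction t as [|t IH]; intros x Hx.
  - rewrite gg_S. destruct (inte L x) eqn:E; [|pose proof (gg_bounds beta L 0 Hb x Hx); lra].
    assert (Hb1: gg beta L 0 x = 1) by (simpl; rewrite E; auto).
    apply inte_true in E. rewrite Hb1.
    destruct (drift_facts beta x Hb ltac:(lia)) as (h1&h2&h3&h4&_).
    pose proof (gg_bounds beta L 0 Hb (x-1)%Z ltac:(lia)).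
    pose proof (gg_bounds beta L 0 Hb (x+1)%Z ltac:(lia)). rewrite h4. nra.
  - rewrite (gg_S beta L (S t) x). pose proof (gg_S beta L t x) as EE.
    destruct (inte L x) eqn:E; [|lra].
    apply inte_true in E.
    destruct (drift_facts beta x Hb ltac:(lia)) as (h1&h2&h3&h4&_).
    pose proof (IH (x-1)%Z ltac:(lia)). pose proof (IH x Hx). pose proof (IH (x+1)%Z ltac:(lia)).
    rewrite h4.
    assert (pdown beta x * gg beta L (S t) (x - 1) <= pdown beta x * gg beta L t (x - 1))
      by (apply Rmult_le_compat_l; lra).
    assert (pup beta x * gg beta L (S t) (x + 1) <= pup beta x * gg beta L t (x + 1))
      by (apply Rmult_le_compat_l; lra).
    rewrite h4 in EE. lra. Qed.

Lemma gg_mono beta L k m : 1 < beta < 2 -> (m <= k)%nat -> forall x, (1 <= x)%Z ->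
  gg beta L k x <= gg beta L m x.
Proof. intros Hb Hk. induction Hk; intros x Hx; [lra|].
  pose proof (gg_step_mono beta L m0 Hb x Hx). specialize (IHHk x Hx). lra. Qed.

Lemma GS_S beta L n x : GS beta L (S n) x = if inte L x then 1 + pdown beta x * GS beta L n (x-1)
   + pstay beta x * GS beta L n x + pup beta x * GS beta L n (x+1) else 0.
Proof. revert x. induction n as [|n IH]; intro x.
  - cbn [GS gg]. destruct (inte L x); ring.
  - change (GS beta L (S (S n)) x) with (GS beta L (S n) x + gg beta L (S n) x).
    rewrite (IH x) at 1. rewrite gg_S. cbn [GS]. destruct (inte L x); cbv beta iota; ring. Qed.

Lemma GS_bound beta L n : 1 < beta < 2 -> (2 <= L)%Z -> forall x, (1 <= x)%Z ->
  GS beta L n x <= 4 * IZR L * IZR x.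
Proof. intros Hb HL. assert (HL': 2 <= IZR L) by (apply IZR_le; lia).
  induction n as [|n IH]; intros x Hx.
  - cbn [GS]. assert (1 <= IZR x) by (apply IZR_le; lia). nra.
  - rewrite GS_S. destruct (inte L x) eqn:E.
    + apply inte_true in E.
      destruct (drift_facts beta x Hb ltac:(lia)) as (h1&h2&h3&h4&h5&_).
      pose proof (IH (x-1)%Z ltac:(lia)). pose proof (IH x Hx). pose proof (IH (x+1)%Z ltac:(lia)).
      rewrite minus_IZR, plus_IZR in *. rewrite h4.
      set (X := IZR x) in *. assert (HX: 2 <= X) by (apply IZR_le; lia).
      assert (HXL: X + 1 <= IZR L) by (unfold X; rewrite <- plus_IZR; apply IZR_le; lia).
      set (Lr := IZR L) in *.
      assert (Hd: 1 <= 4 * Lr * (pdown beta x - pup beta x)).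
      { apply Rle_trans with (4 * Lr * / (2 * (2 * X - 1))).
        - apply Rmult_le_reg_r with (2 * (2 * X - 1)). lra.
          rewrite Rmult_assoc, Rinv_l by lra. lra.
        - apply Rmult_le_compat_l; lra. }
      assert (pdown beta x * GS beta L n (x - 1) <= pdown beta x * (4 * Lr * (X - 1)))
        by (apply Rmult_le_compat_l; lra).
      assert (pup beta x * GS beta L n (x + 1) <= pup beta x * (4 * Lr * (X + 1)))
        by (apply Rmult_le_compat_l; lra).
      nra.
    + assert (1 <= IZR x) by (apply IZR_le; lia). nra.
Qed.

Lemma gg_avg beta L n : 1 < beta < 2 -> forall x, (1 <= x)%Z ->
  INR n * gg beta L n x <= GS beta L n x.
Proof. intro Hb. induction n as [|n IH]; intros x Hx.
  - cbn [GS INR]. lra.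
  - rewrite S_INR. cbn [GS].
    pose proof (gg_step_mono beta L n Hb x Hx). pose proof (IH x Hx).
    pose proof (gg_bounds beta L (S n) Hb x Hx). pose proof (pos_INR n).
    assert (INR n * gg beta L (S n) x <= INR n * gg beta L n x) by (apply Rmult_le_compat_l; lra).
    nra. Qed.

Lemma gg_decay beta L n : 1 < beta < 2 -> (2 <= L)%Z -> (1 <= n)%nat -> forall x, (1 <= x)%Z ->
  gg beta L n x <= 4 * IZR L ^ 2 / INR n.
Proof. intros Hb HL Hn x Hx.
  assert (Hn': 1 <= INR n) by (apply (le_INR 1); auto).
  assert (HL': 2 <= IZR L) by (apply IZR_le; lia).
  destruct (inte L x) eqn:E.
  - apply inte_true in E.
    pose proof (gg_avg beta L n Hb x Hx). pose proof (GS_bound beta L n Hb HL x Hx).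
    assert (IZR x <= IZR L) by (apply IZR_le; lia).
    assert (1 <= IZR x) by (apply IZR_le; lia).
    apply Rmult_le_reg_l with (INR n). lra.
    replace (INR n * (4 * IZR L ^ 2 / INR n)) with (4 * IZR L ^ 2) by (field; lra). nra.
  - rewrite gg_out by auto. apply Rmult_le_pos. nra. left; apply Rinv_0_lt_compat; lra.
Qed.

Lemma gg_submult beta L b th : 1 < beta < 2 -> 0 <= th ->
  (forall y, (1 <= y)%Z -> gg beta L b y <= th) ->
  forall a x, (1 <= x)%Z -> gg beta L (a + b) x <= th * gg beta L a x.
Proof. intros Hb Hth Hsup. induction a as [|a IH]; intros x Hx.
  - change (0 + b)%nat with b. destruct (inte L x) eqn:E.
    + cbn [gg]. rewrite E. specialize (Hsup x Hx). lra.
    + rewrite !gg_out by auto. lra.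
  - replace (S a + b)%nat with (S (a + b)) by lia. rewrite !gg_S.
    destruct (inte L x) eqn:E; [|lra].
    apply inte_true in E.
    destruct (drift_facts beta x Hb ltac:(lia)) as (h1&h2&h3&h4&_).
    pose proof (IH (x-1)%Z ltac:(lia)). pose proof (IH x Hx). pose proof (IH (x+1)%Z ltac:(lia)).
    rewrite h4.
    assert (pdown beta x * gg beta L (a+b) (x - 1) <= pdown beta x * (th * gg beta L a (x - 1)))
      by (apply Rmult_le_compat_l; lra).
    assert (pup beta x * gg beta L (a+b) (x + 1) <= pup beta x * (th * gg beta L a (x + 1)))
      by (apply Rmult_le_compat_l; lra).
    nra. Qed.

Lemma gg_geom beta L M : 1 < beta < 2 -> (2 <= L)%Z -> 8 * IZR L ^ 2 <= INR M ->
  forall j x, (1 <= x)%Z -> gg beta L (j * M) x <= (/2) ^ j.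
Proof. intros Hb HL HM.
  assert (HL': 2 <= IZR L) by (apply IZR_le; lia).
  assert (HM1: (1 <= M)%nat).
  { destruct M. simpl in HM. nra. lia. }
  assert (Hsup: forall y, (1 <= y)%Z -> gg beta L M y <= /2).
  { intros y Hy. pose proof (gg_decay beta L M Hb HL HM1 y Hy).
    assert (4 * IZR L ^ 2 / INR M <= /2).
    { apply Rmult_le_reg_r with (INR M). nra. unfold Rdiv. rewrite Rmult_assoc, Rinv_l by nra. nra. }
    lra. }
  induction j as [|j IH]; intros x Hx.
  - replace (0 * M)%nat with 0%nat by lia. rewrite pow_O. pose proof (gg_bounds beta L 0 Hb x Hx). lra.
  - replace (S j * M)%nat with (j * M + M)%nat by lia.
    pose proof (gg_submult beta L M (/2) Hb ltac:(lra) Hsup (j * M) x Hx).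
    pose proof (IH x Hx). simpl pow. lra.
Qed.

Lemma U3 beta n : 1 < beta < 2 -> forall j m, (j * (n + 1) <= m)%nat ->
  uu beta m 1 <= 2 * hh beta n 2 + (/2) ^ j.
Proof. intro Hb. pose proof (hh_bounds beta n Hb 2%Z ltac:(lia)) as Hh.
  induction j as [|j IH]; intros m Hm.
  - pose proof (uu_bounds beta m Hb 1%Z ltac:(lia)). simpl. lra.
  - destruct m as [|m']. { simpl in Hm. lia. }
    rewrite uu_S. simpl Z.eqb. cbv iota.
    assert (Hm': (j * (n + 1) <= m' - n)%nat) by (simpl in Hm; lia).
    pose proof (IH (m' - n)%nat Hm').
    replace m' with (n + (m' - n))%nat at 1 by (simpl in Hm; lia).
    pose proof (U1 beta n (m' - n) Hb 2%Z ltac:(lia)).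
    simpl pow. lra. Qed.

Lemma UB_point beta L M j s : 1 < beta < 2 -> (2 <= L)%Z -> 8 * IZR L ^ 2 <= INR M ->
  (j * M + j * (j * M + 1) <= s)%nat -> forall x, (1 <= x)%Z ->
  uu beta s x <= IZR x ^ 2 / IZR L ^ 2 + 8 / IZR L ^ 2 + 4 * (/2) ^ j.
Proof. intros Hb HL HM Hs x Hx.
  set (n := (j * M)%nat) in *.
  pose proof (uu_mono beta s (n + j * (n + 1)) Hb Hs x Hx).
  pose proof (U1 beta n (j * (n + 1)) Hb x Hx).
  pose proof (U3 beta n Hb j (j * (n+1)) ltac:(lia)).
  pose proof (U2 beta L n Hb HL x Hx).
  pose proof (U2 beta L n Hb HL 2%Z ltac:(lia)).
  pose proof (gg_geom beta L M Hb HL HM j x Hx).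
  pose proof (gg_geom beta L M Hb HL HM j 2%Z ltac:(lia)).
  replace (IZR 2 ^ 2) with 4 in * by (simpl; ring).
  unfold n in *. unfold Rdiv in *. lra. Qed.

Lemma ser_cv a : ex_series a -> Un_cv (sum_f_R0 a) (Series a).
Proof. intro H. apply is_series_Reals. apply Series_correct; auto. Qed.

Lemma ser_pos_bounded a B : (forall n, 0 <= a n) -> (forall N, sum_f_R0 a N <= B) -> ex_series a.
Proof. intros Ha HB.
  destruct (growing_cv (sum_f_R0 a)) as [l Hl].
  - intro n. simpl. pose proof (Ha (S n)). lra.
  - exists B. intros x [n ->]. apply HB.
  - exists l. apply is_series_Reals. exact Hl. Qed.

Lemma ser_le_bound a B : ex_series a -> (forall N, sum_f_R0 a N <= B) -> Series a <= B.
Proof. intros Ha HB. apply Rle_cv_lim with (sum_f_R0 a) (fun _ => B); auto.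
  - apply ser_cv; auto.
  - intros e He; exists 0%nat; intros; unfold Rdist; rewrite Rminus_diag, Rabs_R0; lra. Qed.

Lemma ser_ge_partial a N : ex_series a -> (forall n, 0 <= a n) -> sum_f_R0 a N <= Series a.
Proof. intros Ha Hp. apply sum_incr; auto. apply ser_cv; auto. Qed.

Lemma sum_le a b N : (forall n, a n <= b n) -> sum_f_R0 a N <= sum_f_R0 b N.
Proof. intro H; induction N; simpl; [apply H| pose proof (H (S N)); lra]. Qed.

Lemma sum_nonneg a N : (forall n, 0 <= a n) -> 0 <= sum_f_R0 a N.
Proof. intro H; induction N; simpl; [apply H| pose proof (H (S N)); lra]. Qed.

Lemma ser_comp a b : (forall n, 0 <= a n <= b n) -> ex_series b -> ex_series a.
Proof. intros H Hb. apply ser_pos_bounded with (Series b).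
  - intro n; apply H.
  - intro N. apply Rle_trans with (sum_f_R0 b N).
    + apply sum_le; intro; apply H.
    + apply ser_ge_partial; auto. intro n; destruct (H n); lra. Qed.

Lemma sum_sub a K q : (forall n, 0 <= a n) ->
  sum_f_R0 (fun i => a (K + i)%nat) q <= sum_f_R0 a (K + q).
Proof. intro H. induction q as [|q IH].
  - change (sum_f_R0 (fun i => a (K+i)%nat) 0) with (a (K+0)%nat). rewrite Nat.add_0_r.
    destruct K as [|K]; [simpl; lra|]. rewrite tech5. pose proof (sum_nonneg a K H). lra.
  - rewrite (tech5 (fun i => a (K+i)%nat) q).
    replace (K + S q)%nat with (S (K + q)) by lia. rewrite tech5. lra. Qed.

Lemma sum_tele G N : sum_f_R0 (fun i => G i - G (S i)) N = G 0%nat - G (S N).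
Proof. induction N; simpl; [ring| rewrite IHN; ring]. Qed.

Lemma ln_le_xm1 x : 0 < x -> ln x <= x - 1.
Proof. intro H. pose proof (exp_ineq1_le (ln x)). rewrite exp_ln in H0 by auto. lra. Qed.

Lemma tele_pow beta y : 1 < beta -> 2 <= y ->
  (beta - 1) * Rpower y (- beta) <= Rpower (y - 1) (- (beta - 1)) - Rpower y (- (beta - 1)).
Proof. intros Hb Hy. set (al := beta - 1).
  assert (E1: Rpower (y - 1) (- al) = Rpower y (- al) * exp (al * (ln y - ln (y-1)))).
  { unfold Rpower. rewrite <- exp_plus. f_equal. ring. }
  assert (E2: Rpower y (- beta) = Rpower y (- al) * / y).
  { unfold al. replace (- beta) with (- (beta - 1) + - (1)) by ring. rewrite Rpower_plus.
    rewrite (Rpower_Ropp y 1), Rpower_1 by lra. auto. }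
  assert (Hd: / y <= ln y - ln (y - 1)).
  { assert (ln ((y-1)/y) <= (y-1)/y - 1) by (apply ln_le_xm1; apply Rdiv_lt_0_compat; lra).
    unfold Rdiv in H. rewrite ln_mult, ln_Rinv in H by (try apply Rinv_0_lt_compat; lra).
    replace ((y - 1) * / y - 1) with (- / y) in H by (field; lra). lra. }
  pose proof (exp_ineq1_le (al * (ln y - ln (y - 1)))).
  rewrite E1, E2. assert (0 < Rpower y (- al)) by apply Rpow_pos.
  assert (al * / y <= al * (ln y - ln (y - 1))) by (apply Rmult_le_compat_l; unfold al; lra).
  nra. Qed.

Definition xC (n : nat) : Z := (2 * Z.of_nat (S n))%Z.
Definition cc beta (k : nat) : R := Rpower (INR k + 1) (- beta).

Lemma cc_pos beta k : 0 < cc beta k.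
Proof. apply Rpow_pos. Qed.

Lemma IZR_xC n : IZR (xC n) = 2 * INR n + 2.
Proof. unfold xC. rewrite mult_IZR, <- INR_IZR_INZ, S_INR. simpl. ring. Qed.

Lemma piC_cc beta n : pi beta (xC n) = 2 * (cc beta (2 * n) + cc beta (S (2 * n))).
Proof. rewrite pi_ge2 by (unfold xC; lia). unfold AA, BB, cc. rewrite minus_IZR, IZR_xC.
  rewrite S_INR, mult_INR. simpl (INR 2). f_equal. f_equal; f_equal; ring. Qed.

Lemma pi_pos_cc beta k : pi beta (Z.of_nat (S (S k))) = 2 * (cc beta k + cc beta (S k)).
Proof. rewrite pi_ge2 by lia. unfold AA, BB, cc. rewrite minus_IZR, <- INR_IZR_INZ.
  rewrite !S_INR. f_equal. f_equal; f_equal; ring. Qed.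

Lemma pi_neg_eq beta n : pi beta (- Z.of_nat (S n)) = pi beta (Z.of_nat (S n)).
Proof. destruct n.
  - simpl. rewrite pi_m1, pi_1; auto.
  - rewrite pi_negge2, pi_ge2 by lia. auto. Qed.

Lemma pi_one beta : pi beta (Z.of_nat 1) = 2.
Proof. apply pi_1. Qed.

Lemma cc_0 beta : cc beta 0 = 1.
Proof. unfold cc. simpl. rewrite Rplus_0_l. apply Rpower_1_base. Qed.

Lemma cc_tele beta k : 1 < beta -> (beta - 1) * cc beta (S k) <=
  Rpower (INR (S k)) (- (beta - 1)) - Rpower (INR (S (S k))) (- (beta - 1)).
Proof. intro Hb. unfold cc. pose proof (tele_pow beta (INR (S k) + 1) Hb).
  rewrite (S_INR (S k)). replace (INR (S k) + 1 - 1) with (INR (S k)) in H by ring.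
  apply H. rewrite S_INR. pose proof (pos_INR k). lra. Qed.

Lemma cc_partial beta N : 1 < beta ->
  sum_f_R0 (cc beta) N <= 1 + (1 - Rpower (INR (S N)) (- (beta - 1))) / (beta - 1).
Proof. intro Hb. induction N.
  - simpl. rewrite cc_0. rewrite Rpower_1_base. unfold Rdiv. lra.
  - simpl sum_f_R0. pose proof (cc_tele beta N Hb).
    assert (cc beta (S N) <= (Rpower (INR (S N)) (- (beta - 1)) - Rpower (INR (S (S N))) (- (beta - 1))) / (beta - 1)).
    { apply Rmult_le_reg_l with (beta - 1). lra. unfold Rdiv.
      match goal with |- _ <= _ * (?X * _) => replace ((beta - 1) * (X * / (beta - 1))) with X by (field; lra) end. lra. }
    unfold Rdiv in *. lra. Qed.

Lemma cc_ex beta : 1 < beta -> ex_series (cc beta).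
Proof. intro Hb. apply ser_pos_bounded with (1 + 1 / (beta - 1)).
  - intro; left; apply cc_pos.
  - intro N. pose proof (cc_partial beta N Hb). pose proof (Rpow_pos (INR (S N)) (- (beta - 1))).
    unfold Rdiv in *. assert (0 < / (beta - 1)) by (apply Rinv_0_lt_compat; lra). nra. Qed.

Lemma sum_pi_pos beta N :
  sum_f_R0 (fun n => pi beta (Z.of_nat (S n))) N = 4 * sum_f_R0 (cc beta) N - 2 * cc beta N.
Proof. induction N.
  - simpl sum_f_R0. rewrite pi_one, cc_0. ring.
  - rewrite !tech5, IHN. rewrite pi_pos_cc. ring. Qed.

Lemma sum_piC beta N :
  sum_f_R0 (fun n => pi beta (xC n)) N = 2 * sum_f_R0 (cc beta) (S (2 * N)).
Proof. induction N.
  - simpl sum_f_R0. rewrite piC_cc. simpl. ring.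
  - rewrite tech5, IHN, piC_cc.
    replace (S (2 * S N)) with (S (S (S (2 * N)))) by lia.
    rewrite !tech5. replace (2 * S N)%nat with (S (S (2 * N))) by lia. ring. Qed.

Lemma cv_subseq u l : Un_cv u l -> Un_cv (fun N => u (S (2 * N))) l.
Proof. intros H e He. destruct (H e He) as [N HN]. exists N. intros n Hn. apply HN. lia. Qed.

Lemma cv_const c : Un_cv (fun _ => c) c.
Proof. intros e He; exists 0%nat; intros; unfold Rdist; rewrite Rminus_diag, Rabs_R0; lra. Qed.

Lemma PC_Ztot beta : 1 < beta ->
  sumZstar (pi beta) (8 * Series (cc beta)) /\ sumC (pi beta) (2 * Series (cc beta)) /\
  0 < Series (cc beta).
Proof. intro Hb. pose proof (cc_ex beta Hb) as Hex. pose proof (ser_cv _ Hex) as Hcv.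
  assert (H0: is_lim_seq (cc beta) 0) by (apply ex_series_lim_0; auto).
  apply is_lim_seq_Reals in Hcv.
  repeat split.
  - unfold sumZstar. apply is_lim_seq_Reals.
    apply is_lim_seq_ext with (fun N => 2 * (4 * sum_f_R0 (cc beta) N - 2 * cc beta N)).
    { intro N. rewrite <- sum_pi_pos. induction N.
      - simpl sum_f_R0. rewrite pi_1, pi_m1. ring.
      - rewrite !tech5. rewrite <- IHN. rewrite pi_neg_eq. ring. }
    replace (8 * Series (cc beta)) with (2 * (4 * Series (cc beta) - 2 * 0)) by ring.
    apply is_lim_seq_mult'. apply is_lim_seq_const.
    apply is_lim_seq_minus'; apply is_lim_seq_mult'; auto; apply is_lim_seq_const.
  - unfold sumC. apply is_lim_seq_Reals.
    apply is_lim_seq_ext with (fun N => 2 * sum_f_R0 (cc beta) (S (2 * N))).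
    { intro N. rewrite <- sum_piC. reflexivity. }
    apply is_lim_seq_mult'. apply is_lim_seq_const.
    apply is_lim_seq_Reals. apply cv_subseq. apply is_lim_seq_Reals. auto.
  - pose proof (ser_ge_partial (cc beta) 0 Hex (fun n => Rlt_le _ _ (cc_pos beta n))).
    simpl in H. rewrite cc_0 in H. lra.
Qed.

Lemma piC_bounds beta n : 1 < beta < 2 ->
  2 * Rpower (2 * INR n + 2) (- beta) <= pi beta (xC n) <= 4 * Rpower (2 * INR n + 1) (- beta).
Proof. intro Hb. rewrite piC_cc. unfold cc.
  replace (INR (2 * n) + 1) with (2 * INR n + 1) by (rewrite mult_INR; simpl; ring).
  replace (INR (S (2 * n)) + 1) with (2 * INR n + 2) by (rewrite S_INR, mult_INR; simpl; ring).
  pose proof (pos_INR n).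
  assert (Rpower (2 * INR n + 2) (- beta) <= Rpower (2 * INR n + 1) (- beta))
    by (apply Rpow_mono_neg; lra).
  pose proof (Rpow_pos (2 * INR n + 2) (- beta)). pose proof (Rpow_pos (2 * INR n + 1) (- beta)).
  lra. Qed.

Lemma piC_pos beta n : 1 < beta < 2 -> 0 < pi beta (xC n).
Proof. intro Hb. pose proof (piC_bounds beta n Hb). pose proof (Rpow_pos (2 * INR n + 2) (- beta)). lra. Qed.

Lemma xC_ge1 n : (1 <= xC n)%Z.
Proof. unfold xC; lia. Qed.

Lemma piC_ex beta : 1 < beta < 2 -> ex_series (fun n => pi beta (xC n)).
Proof. intro Hb. destruct (PC_Ztot beta ltac:(lra)) as (_&H&_).
  exists (2 * Series (cc beta)). apply is_series_Reals. exact H. Qed.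

Lemma piC_val beta : 1 < beta < 2 -> Series (fun n => pi beta (xC n)) = 2 * Series (cc beta).
Proof. intro Hb. destruct (PC_Ztot beta ltac:(lra)) as (_&H&_).
  apply is_series_unique. apply is_series_Reals. exact H. Qed.

Lemma ex_series_scal_R c a : ex_series a -> ex_series (fun n => c * a n).
Proof. intros [l H]. exists (c * l). exact (is_series_scal_l c a l H). Qed.

Definition V beta s := Series (fun n => pi beta (xC n) * uu beta s (xC n)).

Lemma Vterm_bounds beta s n : 1 < beta < 2 ->
  0 <= pi beta (xC n) * uu beta s (xC n) <= pi beta (xC n).
Proof. intro Hb. pose proof (piC_pos beta n Hb). pose proof (uu_bounds beta s Hb (xC n) (xC_ge1 n)).
  split; nra. Qed.

Lemma V_ex beta s : 1 < beta < 2 -> ex_series (fun n => pi beta (xC n) * uu beta s (xC n)).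
Proof. intro Hb. apply ser_comp with (fun n => pi beta (xC n)).
  - intro; apply Vterm_bounds; auto.
  - apply piC_ex; auto. Qed.

Lemma indC_cases y : indC y = 0 \/ (indC y = 1 /\ (2 <= y)%Z /\ Z.even y = true).
Proof. destruct (Z_le_gt_dec y 1).
  - left. destruct (Z.eq_dec y 1) as [->|]; [reflexivity| apply indC_neg; lia].
  - destruct (indC_par y ltac:(lia)) as [(e&e1&_)|(e&e1&_)]; [right; repeat split; auto; lia|left; auto]. Qed.

Lemma stayC_formula beta t : 1 < beta < 2 -> forall y, stayC beta t y = indC y * (/2) ^ t.
Proof. intro Hb. induction t as [|t IH]; intro y.
  - simpl. ring.
  - simpl stayC. destruct (indC_cases y) as [E|(E&Hy&Ev)].
    + rewrite E. ring.
    + rewrite E. rewrite down_ge2, up_ge1 by lia. rewrite !IH.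
      destruct (indC_par y Hy) as [(_&_&e2&e3)|(e&_)]; [|congruence].
      rewrite e2, e3, E. destruct (drift_facts beta y Hb Hy) as (_&_&_&h4&_).
      rewrite h4. simpl. ring. Qed.

Lemma indC_xC n : indC (xC n) = 1.
Proof. unfold indC, xC. rewrite (proj2 (Z.ltb_lt 0 _)) by lia. rewrite Z.even_mul. reflexivity. Qed.

Lemma hit_xC beta s n : 1 < beta < 2 -> hitC beta (S s) (xC n) = /4 + uu beta s (xC n) / 4.
Proof. intro Hb. apply (proj1 (hit_formula beta s Hb (xC n))). apply xC_ge1. Qed.

Lemma J_ex beta t : 1 < beta < 2 -> ex_series (fun n => pi beta (xC n) * hitC beta t (xC n)).
Proof. intro Hb. apply ser_comp with (fun n => pi beta (xC n)); [|apply piC_ex; auto].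
  intro n. pose proof (piC_pos beta n Hb). destruct t.
  - simpl hitC. rewrite indC_xC. lra.
  - rewrite hit_xC by auto. pose proof (uu_bounds beta t Hb (xC n) (xC_ge1 n)). split; nra. Qed.

Lemma J_val_S beta s : 1 < beta < 2 ->
  Series (fun n => pi beta (xC n) * hitC beta (S s) (xC n)) =
  / 4 * Series (fun n => pi beta (xC n)) + / 4 * V beta s.
Proof. intro Hb. unfold V. rewrite <- !Series_scal_l. rewrite <- Series_plus.
  - apply Series_ext. intro n. rewrite hit_xC by auto. field.
  - apply ex_series_scal_R. apply piC_ex; auto.
  - apply ex_series_scal_R. apply V_ex; auto. Qed.

Lemma J_val_0 beta : Series (fun n => pi beta (xC n) * hitC beta 0 (xC n)) = Series (fun n => pi beta (xC n)).
Proof. apply Series_ext. intro n. simpl hitC. rewrite indC_xC. ring. Qed.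

Lemma Sv_val beta t : 1 < beta < 2 ->
  Series (fun n => pi beta (xC n) * stayC beta t (xC n)) = Series (fun n => pi beta (xC n)) * (/2)^t.
Proof. intro Hb. rewrite Rmult_comm, <- Series_scal_l. apply Series_ext. intro n.
  rewrite stayC_formula, indC_xC by auto. ring. Qed.

Lemma sum_le_N a b N : (forall n, (n <= N)%nat -> a n <= b n) -> sum_f_R0 a N <= sum_f_R0 b N.
Proof. intro H; induction N; simpl; [apply H; lia|].
  pose proof (H (S N) (le_n _)). assert (sum_f_R0 a N <= sum_f_R0 b N) by (apply IHN; intros; apply H; lia). lra. Qed.

Lemma Rpower_mul_l a b e : 0 < a -> 0 < b -> Rpower (a * b) e = Rpower a e * Rpower b e.
Proof. intros; rewrite Rpower_mult_distr; auto. Qed.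

Lemma nsqrt_le s : (1 <= s)%nat -> 1 <= sqrt (INR s) /\ INR (Nat.sqrt s) <= sqrt (INR s).
Proof. intro Hs. assert (HsR: 1 <= INR s) by (apply (le_INR 1); auto). split.
  - rewrite <- sqrt_1. apply sqrt_le_1_alt. auto.
  - destruct (Nat.sqrt_spec s ltac:(lia)) as [H1 _].
    apply le_INR in H1. rewrite mult_INR in H1.
    rewrite <- (sqrt_square (INR (Nat.sqrt s))) by apply pos_INR.
    apply sqrt_le_1_alt. nra. Qed.

Lemma V_lower beta s : 1 < beta < 2 -> (1 <= s)%nat ->
  (/4 * Rpower 8 (- beta) * Rpower 20 (1 - beta)) * Rpower (INR s) ((1 - beta) / 2) <= V beta s.
Proof. intros Hb Hs.
  set (K := (10 * (Nat.sqrt s + 1))%nat). set (q := (K / 4)%nat).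
  assert (HK10: (10 <= K)%nat) by (unfold K; lia).
  assert (Hq1: (K < 4 * S q)%nat).
  { unfold q. pose proof (Nat.div_mod K 4 ltac:(lia)). pose proof (Nat.mod_upper_bound K 4 ltac:(lia)). lia. }
  assert (Hq2: (4 * q <= K)%nat).
  { unfold q. pose proof (Nat.div_mod K 4 ltac:(lia)). lia. }
  assert (HKR: 10 <= INR K) by (apply (le_INR 10) in HK10; simpl in HK10; lra).
  set (x0 := 2 * INR K + 2).
  assert (Hx0: 4 <= x0) by (unfold x0; lra).
  destruct (nsqrt_le s Hs) as [Hsq1 Hsq2].
  assert (HsR: 1 <= INR s) by (apply (le_INR 1); auto).
  assert (HKdef: INR K = 10 * (INR (Nat.sqrt s) + 1)) by (unfold K; rewrite mult_INR, plus_INR; simpl; ring).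
  assert (Hx0s: 400 * INR s <= x0 ^ 2).
  { destruct (Nat.sqrt_spec s ltac:(lia)) as [_ H2]. apply lt_INR in H2. rewrite mult_INR, S_INR in H2.
    unfold x0. rewrite HKdef. pose proof (pos_INR (Nat.sqrt s)). nra. }
  set (c := Rpower (8 * INR K) (- beta)).
  assert (Hterm: forall i, (i <= q)%nat -> c <= pi beta (xC (K + i)) * uu beta s (xC (K + i))).
  { intros i Hi.
    assert (HiR: 4 * INR i <= INR K) by (apply le_INR in Hi; apply le_INR in Hq2; rewrite mult_INR in Hq2; simpl in Hq2; lra).
    pose proof (pos_INR i).
    assert (Hu: / 2 <= uu beta s (xC (K + i))).
    { apply LB_half with x0; auto. apply xC_ge1. rewrite IZR_xC, plus_INR. unfold x0. lra. }
    pose proof (piC_bounds beta (K + i) Hb) as [Hp _].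
    rewrite plus_INR in Hp.
    assert (Rpower (8 * INR K) (- beta) <= Rpower (2 * (INR K + INR i) + 2) (- beta))
      by (apply Rpow_mono_neg; lra).
    assert (0 <= Rpower (8 * INR K) (- beta)) by (left; apply Rpow_pos).
    pose proof (piC_pos beta (K + i) Hb).
    assert (pi beta (xC (K + i)) * / 2 <= pi beta (xC (K + i)) * uu beta s (xC (K + i)))
      by (apply Rmult_le_compat_l; lra).
    unfold c. lra. }
  assert (Hsum: c * INR (S q) <= V beta s).
  { apply Rle_trans with (sum_f_R0 (fun n => pi beta (xC n) * uu beta s (xC n)) (K + q)).
    - apply Rle_trans with (sum_f_R0 (fun i => pi beta (xC (K + i)) * uu beta s (xC (K + i))) q).
      + rewrite <- sum_cte. apply sum_le_N. auto.
      + apply (sum_sub (fun n => pi beta (xC n) * uu beta s (xC n))). intro; apply Vterm_bounds; auto.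
    - apply ser_ge_partial. apply V_ex; auto. intro; apply Vterm_bounds; auto. }
  assert (HqR: INR K / 4 <= INR (S q)) by (apply lt_INR in Hq1; rewrite mult_INR in Hq1; replace (INR 4) with 4 in Hq1 by (simpl; ring); lra).
  assert (Hc: c = Rpower 8 (- beta) * Rpower (INR K) (- beta)) by (unfold c; apply Rpower_mul_l; lra).
  assert (HKc: INR K * Rpower (INR K) (- beta) = Rpower (INR K) (1 - beta)).
  { replace (1 - beta) with (1 + - beta) by ring. rewrite Rpower_plus, Rpower_1 by lra. auto. }
  assert (HKs: INR K <= 20 * sqrt (INR s)) by lra.
  assert (Hmono: Rpower (20 * sqrt (INR s)) (1 - beta) <= Rpower (INR K) (1 - beta))
    by (apply Rpow_mono_neg; lra).
  rewrite Rpower_mul_l in Hmono by lra.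
  rewrite <- Rpower_sqrt in Hmono by lra. rewrite Rpower_mult in Hmono.
  replace (/ 2 * (1 - beta)) with ((1 - beta) / 2) in Hmono by field.
  assert (0 < Rpower 8 (- beta)) by apply Rpow_pos.
  assert (0 < c) by apply Rpow_pos.
  assert (c * (INR K / 4) <= c * INR (S q)) by (apply Rmult_le_compat_l; lra).
  assert (E: c * (INR K / 4) = / 4 * Rpower 8 (- beta) * Rpower (INR K) (1 - beta))
    by (rewrite Hc, <- HKc; field).
  assert (/ 4 * Rpower 8 (- beta) * (Rpower 20 (1 - beta) * Rpower (INR s) ((1 - beta) / 2))
          <= / 4 * Rpower 8 (- beta) * Rpower (INR K) (1 - beta))
    by (apply Rmult_le_compat_l; lra).
  lra.
Qed.

Lemma Rpow_mono_exp a e1 e2 : 1 <= a -> e1 <= e2 -> Rpower a e1 <= Rpower a e2.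
Proof. intros Ha He. unfold Rpower. apply exp_mono.
  assert (0 <= ln a) by (rewrite <- ln_1; apply ln_le'; lra). nra. Qed.

Lemma piC_tele beta n : 1 < beta < 2 -> (1 <= n)%nat ->
  pi beta (xC n) <= 4 / (beta - 1) *
    (Rpower (2 * INR n) (- (beta - 1)) - Rpower (2 * INR n + 2) (- (beta - 1))).
Proof. intros Hb Hn. assert (HnR: 1 <= INR n) by (apply (le_INR 1); auto).
  pose proof (piC_bounds beta n Hb) as [_ Hp].
  pose proof (tele_pow beta (2 * INR n + 1) ltac:(lra) ltac:(lra)) as Ht.
  replace (2 * INR n + 1 - 1) with (2 * INR n) in Ht by ring.
  assert (Rpower (2 * INR n + 2) (- (beta - 1)) <= Rpower (2 * INR n + 1) (- (beta - 1)))
    by (apply Rpow_mono_neg; lra).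
  apply Rle_trans with (4 * Rpower (2 * INR n + 1) (- beta)); auto.
  apply Rmult_le_reg_l with (beta - 1). lra.
  replace ((beta - 1) * (4 / (beta - 1) * (Rpower (2 * INR n) (- (beta - 1)) - Rpower (2 * INR n + 2) (- (beta - 1)))))
    with (4 * (Rpower (2 * INR n) (- (beta - 1)) - Rpower (2 * INR n + 2) (- (beta - 1)))) by (field; lra).
  lra. Qed.

Lemma tail_bound beta K N : 1 < beta < 2 -> (1 <= K)%nat ->
  sum_f_R0 (fun i => pi beta (xC (K + i))) N <= 4 / (beta - 1) * Rpower (2 * INR K) (- (beta - 1)).
Proof. intros Hb HK.
  set (G := fun i => 4 / (beta - 1) * Rpower (2 * INR (K + i)) (- (beta - 1))).
  apply Rle_trans with (sum_f_R0 (fun i => G i - G (S i)) N).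
  - apply sum_le. intro i. unfold G. pose proof (piC_tele beta (K + i) Hb ltac:(lia)).
    replace (2 * INR (K + S i)) with (2 * INR (K + i) + 2) by (rewrite !plus_INR, S_INR; ring).
    lra.
  - rewrite sum_tele. unfold G. replace (K + 0)%nat with K by lia.
    assert (0 <= 4 / (beta - 1) * Rpower (2 * INR (K + S N)) (- (beta - 1))).
    { apply Rmult_le_pos. unfold Rdiv. apply Rmult_le_pos; [lra| left; apply Rinv_0_lt_compat; lra].
      left; apply Rpow_pos. }
    lra. Qed.

Lemma head_term beta n K : 1 < beta < 2 -> (n < K)%nat ->
  pi beta (xC n) * IZR (xC n) ^ 2 / (2 * INR K) ^ 2 <= 8 * Rpower (2 * INR K) (- (beta - 1)) / INR K.
Proof. intros Hb Hn.
  assert (HnK: INR n + 1 <= INR K) by (rewrite <- S_INR; apply le_INR; lia).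
  pose proof (pos_INR n).
  pose proof (piC_bounds beta n Hb) as [_ Hp]. rewrite IZR_xC.
  set (y := 2 * INR n + 1) in *.
  assert (Hy: 1 <= y) by (unfold y; lra).
  assert (E1: Rpower y (- beta) * y ^ 2 = Rpower y (2 - beta)).
  { replace (2 - beta) with (- beta + INR 2) by (simpl; ring). rewrite Rpower_plus, Rpower_pow by lra. auto. }
  assert (E2: Rpower (2 * INR K) (2 - beta) = Rpower (2 * INR K) (- (beta - 1)) * (2 * INR K)).
  { replace (2 - beta) with (- (beta - 1) + 1) by ring. rewrite Rpower_plus, Rpower_1 by lra. auto. }
  assert (M: Rpower y (2 - beta) <= Rpower (2 * INR K) (2 - beta)) by (apply Rpow_mono_pos; unfold y in *; lra).
  assert (H2: (2 * INR n + 2) ^ 2 <= 4 * y ^ 2) by (unfold y; nra).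
  assert (Hpos: 0 < Rpower y (- beta)) by apply Rpow_pos.
  assert (pi beta (xC n) * (2 * INR n + 2) ^ 2 <= 16 * Rpower (2 * INR K) (2 - beta)).
  { apply Rle_trans with (4 * Rpower y (- beta) * (4 * y ^ 2)).
    - apply Rmult_le_compat; try lra. pose proof (piC_pos beta n Hb); lra. nra.
    - nra. }
  rewrite E2 in H0. set (R0 := Rpower (2 * INR K) (- (beta - 1))) in *.
  assert (HK: 1 <= INR K) by lra.
  apply Rmult_le_reg_r with ((2 * INR K) ^ 2). nra.
  unfold Rdiv. rewrite Rmult_assoc, Rinv_l by nra.
  replace (8 * R0 * / INR K * (2 * INR K) ^ 2) with (16 * (R0 * (2 * INR K))) by (field; lra).
  lra. Qed.

Lemma V_upper beta K j s : 1 < beta < 2 -> (1 <= K)%nat -> j = S (Nat.log2 (2 * K)) ->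
  (j * (32 * K * K) + j * (j * (32 * K * K) + 1) <= s)%nat ->
  V beta s <= (8 + 4 / (beta - 1) + 8 * Series (fun n => pi beta (xC n))) * Rpower (2 * INR K) (- (beta - 1)).
Proof. intros Hb HK Hj Hs.
  assert (HKR: 1 <= INR K) by (apply (le_INR 1); auto).
  set (L := (2 * Z.of_nat K)%Z).
  assert (HL: (2 <= L)%Z) by (unfold L; lia).
  assert (HLR: IZR L = 2 * INR K) by (unfold L; rewrite mult_IZR, <- INR_IZR_INZ; auto).
  assert (HM: 8 * IZR L ^ 2 <= INR (32 * K * K)) by (rewrite HLR, !mult_INR; replace (INR 32) with 32 by (simpl; ring); nra).
  pose proof (UB_point beta L (32 * K * K) j s Hb HL HM Hs) as UB.
  set (R0 := Rpower (2 * INR K) (- (beta - 1))).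
  assert (HR0: 0 < R0) by apply Rpow_pos.
  assert (Hinv: / (2 * INR K) <= R0).
  { unfold R0. rewrite <- (Rpower_1 (2 * INR K)) at 1 by lra. rewrite <- Rpower_Ropp.
    apply Rpow_mono_exp; lra. }
  assert (Hpow: (/ 2) ^ j <= / (2 * INR K)).
  { rewrite pow_inv. apply Rinv_le_contravar. lra.
    destruct (Nat.log2_spec (2 * K) ltac:(lia)) as [_ H2]. rewrite <- Hj in H2.
    apply lt_INR in H2. rewrite pow_INR, mult_INR in H2. replace (INR 2) with 2 in H2 by (simpl; ring). lra. }
  set (eps := 8 / IZR L ^ 2 + 4 * (/ 2) ^ j).
  assert (Heps: 0 <= eps <= 8 * R0).
  { unfold eps. rewrite HLR. split.
    - assert (0 <= (/2) ^ j) by (apply pow_le; lra).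
      assert (0 <= 8 / (2 * INR K) ^ 2) by (unfold Rdiv; apply Rmult_le_pos; [lra| left; apply Rinv_0_lt_compat; nra]).
      lra.
    - assert (8 / (2 * INR K) ^ 2 <= 4 * / (2 * INR K)).
      { apply Rmult_le_reg_r with ((2 * INR K) ^ 2). nra. unfold Rdiv.
        rewrite Rmult_assoc, Rinv_l by nra.
        replace (4 * / (2 * INR K) * (2 * INR K) ^ 2) with (8 * INR K) by (field; lra). lra. }
      lra. }
  pose proof (piC_ex beta Hb) as Hpex. set (PCv := Series (fun n => pi beta (xC n))) in *.
  assert (HPC: 0 <= PCv).
  { unfold PCv. apply Rle_trans with (sum_f_R0 (fun n => pi beta (xC n)) 0).
    - simpl. left; apply piC_pos; auto.
    - apply ser_ge_partial; auto. intro; left; apply piC_pos; auto. }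
  unfold V. rewrite (Series_incr_n _ K) by (try lia; apply V_ex; auto).
  assert (Head: sum_f_R0 (fun n => pi beta (xC n) * uu beta s (xC n)) (Init.Nat.pred K) <= 8 * R0 + eps * PCv).
  { apply Rle_trans with (sum_f_R0 (fun n => 8 * R0 / INR K + pi beta (xC n) * eps) (Init.Nat.pred K)).
    - apply sum_le_N. intros n Hn.
      pose proof (head_term beta n K Hb ltac:(lia)) as Hh. fold R0 in Hh.
      specialize (UB (xC n) (xC_ge1 n)). fold eps in UB.
      pose proof (piC_pos beta n Hb).
      assert (pi beta (xC n) * uu beta s (xC n) <= pi beta (xC n) * (IZR (xC n) ^ 2 / IZR L ^ 2 + eps)).
      { apply Rmult_le_compat_l. lra. unfold eps in *. lra. }
      rewrite HLR in H0. unfold Rdiv in *.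
      assert (E: pi beta (xC n) * (IZR (xC n) ^ 2 * / (2 * INR K) ^ 2 + eps) =
        pi beta (xC n) * IZR (xC n) ^ 2 * / (2 * INR K) ^ 2 + pi beta (xC n) * eps) by ring.
      lra.
    - rewrite plus_sum, sum_cte.
      replace (S (Init.Nat.pred K)) with K by lia.
      rewrite <- scal_sum.
      assert (sum_f_R0 (fun n => pi beta (xC n)) (Init.Nat.pred K) <= PCv)
        by (apply ser_ge_partial; auto; intro; left; apply piC_pos; auto).
      replace (8 * R0 / INR K * INR K) with (8 * R0) by (field; lra). nra. }
  assert (Tail: Series (fun k => pi beta (xC (K + k)) * uu beta s (xC (K + k))) <= 4 / (beta - 1) * R0).
  { apply Rle_trans with (Series (fun k => pi beta (xC (K + k)))).
    - apply Series_le. intro; apply Vterm_bounds; auto.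
      apply (ex_series_incr_n (fun n => pi beta (xC n)) K). auto.
    - apply ser_le_bound. apply (ex_series_incr_n (fun n => pi beta (xC n)) K). auto.
      intro N. apply tail_bound; auto. }
  assert (8 * R0 * PCv >= eps * PCv) by (apply Rle_ge; apply Rmult_le_compat_r; lra).
  assert (E: (8 + 4 / (beta - 1) + 8 * PCv) * R0 = 8 * R0 + 4 / (beta - 1) * R0 + 8 * R0 * PCv) by ring.
  rewrite E. lra.
Qed.

Lemma time_cond K l j sq s : (1 <= K)%nat -> (1 <= l)%nat -> (j + 1 <= l)%nat ->
  (12 * l * K <= sq)%nat -> (sq * sq <= s)%nat ->
  (j * (32 * K * K) + j * (j * (32 * K * K) + 1) <= s)%nat.
Proof. intros HK Hl Hj Hsq Hs.
  assert (H1: (j * (32 * K * K) + j * (j * (32 * K * K) + 1) <= 32 * K * K * (l * l) + l)%nat).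
  { assert (j * (32 * K * K) + j * (j * (32 * K * K) + 1) = 32 * K * K * (j * (j + 1)) + j)%nat by ring.
    assert (j * (j + 1) <= l * l)%nat by nia. nia. }
  assert (H2: (l <= K * K * (l * l))%nat) by nia.
  assert (H3: ((12 * l * K) * (12 * l * K) <= sq * sq)%nat) by nia.
  nia. Qed.

Lemma ln_pos_le a b : 0 < a -> a <= b -> ln a <= ln b.
Proof. apply ln_le'. Qed.

Lemma UB_final beta : 1 < beta < 2 -> exists Cu, 0 < Cu /\ forall s, 10000000000 <= INR s ->
  V beta s <= Cu * Rpower (sqrt (INR s) / (2 * (24 * ln (INR s) + 24))) (- (beta - 1)).
Proof. intro Hb.
  pose proof (piC_ex beta Hb) as Hpex.
  assert (HPC: 0 <= Series (fun n => pi beta (xC n))).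
  { apply Rle_trans with (sum_f_R0 (fun n => pi beta (xC n)) 0).
    - simpl. left; apply piC_pos; auto.
    - apply ser_ge_partial; auto. intro; left; apply piC_pos; auto. }
  exists (8 + 4 / (beta - 1) + 8 * Series (fun n => pi beta (xC n))). split.
  { assert (0 < 4 / (beta - 1)) by (apply Rdiv_lt_0_compat; lra). lra. }
  intros s Hs.
  set (sR := INR s) in *.
  set (sq := Nat.sqrt s). set (lg := Nat.log2 s). set (l := (lg + 2)%nat). set (D := (12 * l)%nat).
  set (K := (sq / D)%nat).
  assert (HsN: (1 <= s)%nat).
  { destruct s; [unfold sR in Hs; simpl in Hs; lra| lia]. }
  destruct (Nat.sqrt_spec s ltac:(lia)) as [Hsq1 Hsq2]. fold sq in Hsq1, Hsq2.
  destruct (Nat.log2_spec s ltac:(lia)) as [Hlg _]. fold lg in Hlg.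
  assert (HD0: (D <> 0)%nat) by (unfold D, l; lia).
  pose proof (Nat.div_mod sq D HD0) as Hdm. pose proof (Nat.mod_upper_bound sq D HD0) as Hmod.
  fold K in Hdm.
  set (r := (sq mod D)%nat) in *.
  assert (HsR: 10000000000 <= sR) by auto.
  assert (Hsqrt: INR sq <= sqrt sR < INR sq + 1).
  { split.
    - apply le_INR in Hsq1. rewrite mult_INR in Hsq1.
      rewrite <- (sqrt_square (INR sq)) by apply pos_INR. apply sqrt_le_1_alt. auto.
    - apply lt_INR in Hsq2. rewrite mult_INR, S_INR in Hsq2.
      rewrite <- (sqrt_square (INR sq + 1)) by (pose proof (pos_INR sq); lra).
      apply sqrt_lt_1_alt. split; [lra|auto]. }
  set (w := sqrt (sqrt sR)).
  assert (Hw2: sqrt sR = w * w) by (unfold w; rewrite sqrt_sqrt; auto; apply sqrt_pos).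
  assert (Hw4: sR = (w * w) * (w * w)) by (rewrite <- Hw2; rewrite sqrt_sqrt; lra).
  assert (Hsq5: 100000 <= sqrt sR).
  { rewrite <- (sqrt_square 100000) by lra. apply sqrt_le_1_alt. lra. }
  assert (Hw: 316 <= w).
  { unfold w. rewrite <- (sqrt_square 316) by lra. apply sqrt_le_1_alt. lra. }
  assert (Hlnw: ln sR = 4 * ln w).
  { rewrite Hw4. rewrite !ln_mult by nra. ring. }
  assert (Hlnw2: ln w <= w - 1) by (apply ln_le_xm1; lra).
  assert (Hlg2: INR lg <= 2 * ln sR).
  { assert (2 ^ lg <= sR) by (unfold sR; apply le_INR in Hlg; rewrite pow_INR in Hlg;
      replace (INR 2) with 2 in Hlg by (simpl; ring); auto).
    assert (ln (2 ^ lg) <= ln sR) by (apply ln_le'; [apply pow_lt; lra| auto]).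
    rewrite ln_pow in H0 by lra. pose proof ln_lt_2. pose proof (pos_INR lg). nra. }
  assert (HDR: INR D = 12 * (INR lg + 2)) by (unfold D, l; rewrite mult_INR, plus_INR; simpl; ring).
  assert (HDR2: INR D <= 24 * ln sR + 24) by lra.
  assert (HDR3: 24 <= INR D) by (rewrite HDR; pose proof (pos_INR lg); lra).
  assert (Hbig: 2 * INR D <= INR sq) by nra.
  assert (HsqD: (D < sq)%nat) by (apply INR_lt; lra).
  assert (HK1: (1 <= K)%nat) by (destruct K; [lia| lia]).
  assert (HKR: 1 <= INR K) by (apply (le_INR 1); auto).
  assert (HDK: (12 * l * K <= sq)%nat) by (unfold D in Hdm; lia).
  assert (H2K: (2 * K <= s)%nat) by nia.
  set (j := S (Nat.log2 (2 * K))).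
  assert (Hj: (j + 1 <= l)%nat).
  { unfold j, l. pose proof (Nat.log2_le_mono _ _ H2K). fold lg in H. lia. }
  pose proof (time_cond K l j sq s HK1 ltac:(unfold l; lia) Hj HDK Hsq1) as Htc.
  pose proof (V_upper beta K j s Hb HK1 eq_refl Htc) as HV.
  assert (HKlow: sqrt sR / (2 * (24 * ln sR + 24)) <= 2 * INR K).
  { apply le_INR in Hmod. rewrite S_INR in Hmod.
    assert (Hsqe: INR sq = INR D * INR K + INR r) by (rewrite Hdm at 1; rewrite plus_INR, mult_INR; auto).
    assert (INR sq <= 2 * INR D * INR K) by nra.
    assert (sqrt sR <= 2 * INR sq) by nra.
    assert (0 < 24 * ln sR + 24) by lra.
    apply Rmult_le_reg_r with (2 * (24 * ln sR + 24)). lra.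
    unfold Rdiv. rewrite Rmult_assoc, Rinv_l by lra. nra. }
  assert (Hpos: 0 < sqrt sR / (2 * (24 * ln sR + 24))).
  { apply Rdiv_lt_0_compat; lra. }
  assert (Rpower (2 * INR K) (- (beta - 1)) <= Rpower (sqrt sR / (2 * (24 * ln sR + 24))) (- (beta - 1)))
    by (apply Rpow_mono_neg; lra).
  assert (0 < 8 + 4 / (beta - 1) + 8 * Series (fun n => pi beta (xC n))).
  { assert (0 < 4 / (beta - 1)) by (apply Rdiv_lt_0_compat; lra). lra. }
  apply Rle_trans with (1 := HV). apply Rmult_le_compat_l; lra.
Qed.

Lemma ln_sqrt_eq z : 0 < z -> ln (sqrt z) = ln z / 2.
Proof. intro H. pose proof (sqrt_lt_R0 z H).
  assert (ln z = ln (sqrt z * sqrt z)) by (rewrite sqrt_sqrt; lra).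
  rewrite ln_mult in H1 by lra. lra. Qed.

Lemma ln_le_2sqrt z : 0 < z -> ln z <= 2 * sqrt z.
Proof. intro H. pose proof (sqrt_lt_R0 z H). rewrite <- (sqrt_sqrt z) at 1 by lra.
  rewrite ln_mult by lra. pose proof (ln_le_xm1 (sqrt z) H0). lra. Qed.

Lemma ln_unbounded B : exists N, forall t, (N <= t)%nat -> B <= ln (INR t).
Proof. destruct (INR_archimed 1 (exp B) ltac:(lra)) as [N HN]. exists N. intros t Ht.
  apply le_INR in Ht. pose proof (exp_pos B).
  rewrite <- (ln_exp B) at 1. apply ln_le'; auto. lra. Qed.

Lemma big_eventually A al eps : 0 < al -> 0 < eps -> exists B, 1 <= B /\ forall y, B <= y ->
  A + al * ln (48 * y + 48) <= eps * y.
Proof. intros Ha He.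
  exists (1 + Rabs A * 2 / eps + 1536 * al ^ 2 / eps ^ 2). split.
  { assert (0 <= Rabs A * 2 / eps) by (apply Rdiv_le_0_compat; [pose proof (Rabs_pos A); lra| lra]).
    assert (0 <= 1536 * al ^ 2 / eps ^ 2) by (apply Rdiv_le_0_compat; nra).
    lra. }
  intros y Hy.
  assert (0 <= Rabs A * 2 / eps) by (apply Rdiv_le_0_compat; [pose proof (Rabs_pos A); lra| lra]).
  assert (H2: 0 <= 1536 * al ^ 2 / eps ^ 2) by (apply Rdiv_le_0_compat; nra).
  assert (Hy1: 1 <= y) by lra.
  assert (HA: A <= eps * y / 2).
  { assert (Rabs A * 2 / eps <= y) by lra.
    apply Rmult_le_compat_r with (r := eps / 2) in H0; [|lra].
    replace (Rabs A * 2 / eps * (eps / 2)) with (Rabs A) in H0 by (field; lra).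
    pose proof (Rle_abs A). unfold Rdiv in *. lra. }
  assert (Hs: sqrt (48 * y + 48) <= eps / (4 * al) * y).
  { rewrite <- (sqrt_square (eps / (4 * al) * y)) by (apply Rmult_le_pos; [apply Rdiv_le_0_compat| ]; lra).
    apply sqrt_le_1_alt.
    assert (1536 * al ^ 2 / eps ^ 2 <= y) by lra.
    apply Rmult_le_compat_r with (r := eps ^ 2 / (16 * al ^ 2) * y) in H0;
      [| apply Rmult_le_pos; [apply Rdiv_le_0_compat; nra| lra]].
    replace (1536 * al ^ 2 / eps ^ 2 * (eps ^ 2 / (16 * al ^ 2) * y)) with (96 * y) in H0 by (field; lra).
    replace (eps / (4 * al) * y * (eps / (4 * al) * y)) with (y * (eps ^ 2 / (16 * al ^ 2) * y)) by (field; lra).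
    lra. }
  pose proof (ln_le_2sqrt (48 * y + 48) ltac:(lra)) as HL.
  assert (HH: al * ln (48 * y + 48) <= al * (2 * (eps / (4 * al) * y))) by (apply Rmult_le_compat_l; lra).
  replace (al * (2 * (eps / (4 * al) * y))) with (eps * y / 2) in HH by (field; lra).
  lra. Qed.

Theorem mainTheorem8 (beta : R) (hbeta : 1 < beta < 2) :
  exists (Ztot PC : R) (J Sv : nat -> R),
    sumZstar (pi beta) Ztot /\
    sumC (pi beta) PC /\
    (forall t : nat, sumC (fun x => pi beta x * hitC beta t x) (J t)) /\
    (forall t : nat, sumC (fun x => pi beta x * stayC beta t x) (Sv t)) /\
    PC / Ztot = 1 / 4 /\
    (exists T : nat, forall t : nat, (T <= t)%nat -> J t / PC > 1 / 4) /\
    Un_cv (fun t : nat => ln (J t / PC - 1 / 4) / ln (INR t)) ((1 - beta) / 2) /\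
    (exists c K : R, 0 < c /\
       forall t : nat, Sv t / Ztot <= K * exp (- c * INR t)).
Proof.
  set (Sc := Series (cc beta)).
  destruct (PC_Ztot beta ltac:(lra)) as (HZ & HP & HS). fold Sc in HZ, HP, HS.
  pose proof (piC_val beta hbeta) as HPv. fold Sc in HPv.
  set (J := fun t => Series (fun n => pi beta (xC n) * hitC beta t (xC n))).
  set (Sv := fun t => Series (fun n => pi beta (xC n) * stayC beta t (xC n))).
  set (PC := 2 * Sc).
  assert (HPC: 0 < PC) by (unfold PC; lra).
  assert (HJS: forall s, J (S s) / PC - 1 / 4 = V beta s / (4 * PC)).
  { intro s. unfold J. rewrite J_val_S by auto. rewrite HPv. unfold PC. field. lra. }
  set (cL := / 4 * Rpower 8 (- beta) * Rpower 20 (1 - beta)).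
  assert (HcL: 0 < cL).
  { unfold cL. pose proof (Rpow_pos 8 (- beta)). pose proof (Rpow_pos 20 (1 - beta)). nra. }
  assert (Vpos: forall s, (1 <= s)%nat -> 0 < V beta s).
  { intros s Hs. pose proof (V_lower beta s hbeta Hs). fold cL in H.
    pose proof (Rpow_pos (INR s) ((1 - beta) / 2)). nra. }
  exists (8 * Sc), PC, J, Sv.
  split; [exact HZ|]. split; [exact HP|].
  split.
  { intro t. unfold sumC. apply is_series_Reals. apply (Series_correct _ (J_ex beta t hbeta)). }
  split.
  { intro t.
    assert (HSvex: ex_series (fun n => pi beta (xC n) * stayC beta t (xC n))).
    2:{ unfold sumC. apply is_series_Reals. apply (Series_correct _ HSvex). }
    apply ser_comp with (fun n => pi beta (xC n)); [|apply piC_ex; auto].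
    intro n. rewrite stayC_formula, indC_xC by auto. pose proof (piC_pos beta n hbeta).
    assert (0 < (/2) ^ t) by (apply pow_lt; lra).
    assert ((/2) ^ t <= 1) by (rewrite <- (pow1 t); apply pow_incr; lra). split; nra. }
  split. { unfold PC. field. lra. }
  split.
  { exists 2%nat. intros t Ht. destruct t as [|s]; [lia|].
    assert (J (S s) / PC - 1 / 4 > 0).
    { rewrite HJS. apply Rdiv_lt_0_compat; [apply Vpos; lia| lra]. }
    lra. }
  split.
  2:{ exists (ln 2), (/ 4). split. { pose proof ln_lt_2. lra. }
      intro t. unfold Sv. rewrite Sv_val by auto. rewrite HPv.
      replace (- ln 2 * INR t) with (INR t * ln (/ 2)) by (rewrite ln_Rinv by lra; ring).
      fold (Rpower (/ 2) (INR t)). rewrite Rpower_pow by lra. right. field. lra. }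
  set (al := beta - 1). set (ga := (1 - beta) / 2).
  destruct (UB_final beta hbeta) as [Cu [HCu HUB]].
  set (A := ln Cu - ln (4 * PC) + al / 2 * ln 2).
  intros eps Heps. set (ep := eps / 2).
  assert (Hep: 0 < ep) by (unfold ep; lra).
  destruct (big_eventually A al ep ltac:(unfold al; lra) Hep) as [B [HB1 HB]].
  destruct (ln_unbounded B) as [N1 HN1].
  destruct (ln_unbounded (Rabs (ln (cL / (4 * PC))) / ep)) as [N2 HN2].
  destruct (INR_archimed 1 10000000000 ltac:(lra)) as [N3 HN3].
  exists (N1 + N2 + N3 + 2)%nat. intros t Ht.
  destruct t as [|s]; [lia|].
  assert (Hs1: (1 <= s)%nat) by lia.
  assert (HsR: 1 <= INR s) by (apply (le_INR 1); auto).
  assert (HtR: INR (S s) = INR s + 1) by apply S_INR.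
  set (y := ln (INR (S s))).
  assert (Hy: B <= y) by (apply HN1; lia).
  assert (Hy2: Rabs (ln (cL / (4 * PC))) / ep <= y) by (apply HN2; lia).
  assert (Hy0: 0 < y) by lra.
  assert (HsBig: 10000000000 <= INR s). { assert (INR N3 <= INR s) by (apply le_INR; lia). lra. }
  rewrite HJS.
  set (e := V beta s / (4 * PC)).
  assert (He: 0 < e) by (unfold e; apply Rdiv_lt_0_compat; [apply Vpos; auto| lra]).
  assert (Hlow: ln (cL / (4 * PC)) + ga * y <= ln e).
  { pose proof (V_lower beta s hbeta Hs1) as HV. fold cL in HV.
    assert (Rpower (INR (S s)) ga <= Rpower (INR s) ga) by (apply Rpow_mono_neg; unfold ga; lra).
    assert (cL / (4 * PC) * Rpower (INR (S s)) ga <= e).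
    { assert (cL * Rpower (INR (S s)) ga <= V beta s).
      { unfold ga in *. assert (cL * Rpower (INR (S s)) ((1 - beta) / 2) <= cL * Rpower (INR s) ((1 - beta) / 2))
          by (apply Rmult_le_compat_l; lra). lra. }
      unfold e. replace (cL / (4 * PC) * Rpower (INR (S s)) ga) with (cL * Rpower (INR (S s)) ga * / (4 * PC)) by (field; lra).
      unfold Rdiv. apply Rmult_le_compat_r; auto. left; apply Rinv_0_lt_compat; lra. }
    assert (0 < cL / (4 * PC)) by (apply Rdiv_lt_0_compat; lra).
    pose proof (Rpow_pos (INR (S s)) ga).
    assert (ln (cL / (4 * PC) * Rpower (INR (S s)) ga) <= ln e) by (apply ln_le'; [nra| auto]).
    rewrite ln_mult, ln_Rpower in H3 by lra. unfold y. lra. }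
  assert (Hup: ln e <= A + ga * y + al * ln (48 * y + 48)).
  { specialize (HUB s HsBig). fold al in HUB.
    set (X := 2 * (24 * ln (INR s) + 24)) in *.
    assert (Hlns0: 0 <= ln (INR s)) by (rewrite <- ln_1; apply ln_le'; lra).
    assert (HX: 0 < X) by (unfold X; lra).
    assert (Hsq: 0 < sqrt (INR s)) by (apply sqrt_lt_R0; lra).
    assert (Hq: 0 < sqrt (INR s) / X) by (apply Rdiv_lt_0_compat; lra).
    pose proof (Rpow_pos (sqrt (INR s) / X) (- al)).
    assert (ln (V beta s) <= ln (Cu * Rpower (sqrt (INR s) / X) (- al)))
      by (apply ln_le'; [apply Vpos; auto| auto]).
    rewrite ln_mult, ln_Rpower in H0 by lra.
    unfold Rdiv in H0. rewrite ln_mult, ln_Rinv, ln_sqrt_eq in H0 by (try apply Rinv_0_lt_compat; lra).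
    assert (Hst: ln (INR (S s)) <= ln 2 + ln (INR s)).
    { rewrite <- ln_mult by lra. apply ln_le'; lra. }
    assert (Hst2: ln (INR s) <= ln (INR (S s))) by (apply ln_le'; lra).
    assert (HXle: ln X <= ln (48 * y + 48)) by (apply ln_le'; [auto| unfold X, y in *; lra]).
    assert (al * ln X <= al * ln (48 * y + 48)) by (apply Rmult_le_compat_l; unfold al; lra).
    assert (Hee: ln e = ln (V beta s) - ln (4 * PC)).
    { unfold e, Rdiv. rewrite ln_mult, ln_Rinv by (try apply Rinv_0_lt_compat; try apply Vpos; auto; lra). ring. }
    rewrite Hee. fold y in Hst, Hst2.
    assert (E0: ln Cu + - al * (ln (INR s) / 2 + - ln X) = ln Cu - al / 2 * ln (INR s) + al * ln X) by (unfold Rminus; field).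
    assert (Hga: ga = - (al / 2)) by (unfold ga, al; field).
    assert (HH: al / 2 * y <= al / 2 * (ln 2 + ln (INR s))) by (apply Rmult_le_compat_l; unfold al; lra).
    assert (E1: A + ga * y = ln Cu - ln (4 * PC) + al / 2 * ln 2 - al / 2 * y) by (unfold A; rewrite Hga; ring).
    assert (E2: al / 2 * (ln 2 + ln (INR s)) = al / 2 * ln 2 + al / 2 * ln (INR s)) by ring.
    lra. }
  specialize (HB y Hy).
  assert (Hlc: - (ep * y) <= ln (cL / (4 * PC))).
  { assert (Rabs (ln (cL / (4 * PC))) <= ep * y).
    { apply Rmult_le_compat_r with (r := ep) in Hy2; [|lra].
      replace (Rabs (ln (cL / (4 * PC))) / ep * ep) with (Rabs (ln (cL / (4 * PC)))) in Hy2 by (field; lra). lra. }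
    pose proof (Rabs_le_between (ln (cL / (4 * PC))) ). apply Rabs_le_between in H. lra. }
  assert (Hr1: ga - ep <= ln e / y).
  { apply Rmult_le_reg_r with y; auto. unfold Rdiv. rewrite Rmult_assoc, Rinv_l by lra. lra. }
  assert (Hr2: ln e / y <= ga + ep).
  { apply Rmult_le_reg_r with y; auto. unfold Rdiv. rewrite Rmult_assoc, Rinv_l by lra. lra. }
  unfold Rdist. apply Rabs_lt_between. unfold ep in *. split; lra.
Qed.
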